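(* There exist a Cantor set $W\subseteq\mathbb{R}^2$, a metric on $W$ compatible with its topology, and a homeomorphism $G\colon W\to W$ which is not transitive, has the (LRS) property with respect to that metric, and whose set of periodic points consists of a single fixed point.
   Context: A Cantor set is a compact metric space that is totally disconnected and has no isolated points. A map $f\colon X\to X$ on a metric space $(X,d)$ has the (LRS) (locally radially shrinking) property if for every $x\in X$ there is $\varepsilon_x>0$ such that $0<d(x,y)<\varepsilon_x$ implies $d(f(x),f(y))<d(x,y)$. $G$ is transitive if for all nonempty open $U,V\subseteq W$ there is $n\in\mathbb{N}$ with $G^n(U)\cap V\neq\emptyset$. A periodic point is $x$ with $G^n(x)=x$ for some $n\geq 1$. *)

(* Defs.v *)
From Stdlib Require Import Reals List.
Open Scope R_scope.

Definition euclid (p q : R * R) : R :=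
  sqrt ((fst p - fst q)^2 + (snd p - snd q)^2).

Definition is_metric_on {X : Type} (W : X -> Prop) (d : X -> X -> R) : Prop :=
  (forall x y, W x -> W y -> 0 <= d x y) /\
  (forall x y, W x -> W y -> (d x y = 0 <-> x = y)) /\
  (forall x y, W x -> W y -> d x y = d y x) /\
  (forall x y z, W x -> W y -> W z -> d x z <= d x y + d y z).

Definition ropen {X : Type} (W : X -> Prop) (d : X -> X -> R) (U : X -> Prop) : Prop :=
  (forall x, U x -> W x) /\
  (forall x, U x -> exists e, 0 < e /\ forall y, W y -> d x y < e -> U y).

Definition compatible {X : Type} (W : X -> Prop) (d1 d2 : X -> X -> R) : Prop :=
  forall U, ropen W d1 U <-> ropen W d2 U.

Definition compact_in {X : Type} (W : X -> Prop) (d : X -> X -> R) : Prop :=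
  forall (I : Type) (U : I -> X -> Prop),
    (forall i, ropen W d (U i)) ->
    (forall x, W x -> exists i, U i x) ->
    exists l : list I, forall x, W x -> exists i, In i l /\ U i x.

Definition connected_in {X : Type} (A : X -> Prop) (d : X -> X -> R) : Prop :=
  forall U V, ropen A d U -> ropen A d V ->
    (forall x, A x -> U x \/ V x) ->
    (forall x, ~ (U x /\ V x)) ->
    (exists x, U x) -> (exists x, V x) -> False.

Definition totally_disconnected {X : Type} (W : X -> Prop) (d : X -> X -> R) : Prop :=
  forall A : X -> Prop, (forall x, A x -> W x) -> connected_in A d ->
    forall x y, A x -> A y -> x = y.

Definition no_isolated_points {X : Type} (W : X -> Prop) (d : X -> X -> R) : Prop :=
  forall x, W x -> forall e, 0 < e -> exists y, W y /\ y <> x /\ d x y < e.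

Definition cantor_set {X : Type} (W : X -> Prop) (d : X -> X -> R) : Prop :=
  compact_in W d /\ totally_disconnected W d /\ no_isolated_points W d.

Definition maps_into {X : Type} (W : X -> Prop) (G : X -> X) : Prop :=
  forall x, W x -> W (G x).

Definition continuous_on {X : Type} (W : X -> Prop) (d : X -> X -> R) (G : X -> X) : Prop :=
  forall x, W x -> forall e, 0 < e -> exists del, 0 < del /\
    forall y, W y -> d x y < del -> d (G x) (G y) < e.

Definition homeomorphism_on {X : Type} (W : X -> Prop) (d : X -> X -> R) (G : X -> X) : Prop :=
  maps_into W G /\ continuous_on W d G /\
  exists H : X -> X, maps_into W H /\ continuous_on W d H /\
    (forall x, W x -> H (G x) = x) /\ (forall x, W x -> G (H x) = x).

Definition transitive_on {X : Type} (W : X -> Prop) (d : X -> X -> R) (G : X -> X) : Prop :=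
  forall U V, ropen W d U -> ropen W d V -> (exists x, U x) -> (exists x, V x) ->
    exists n : nat, (1 <= n)%nat /\ exists x, U x /\ V (Nat.iter n G x).

Definition LRS {X : Type} (W : X -> Prop) (d : X -> X -> R) (G : X -> X) : Prop :=
  forall x, W x -> exists ex, 0 < ex /\
    forall y, W y -> 0 < d x y < ex -> d (G x) (G y) < d x y.

Definition periodic_point {X : Type} (G : X -> X) (x : X) : Prop :=
  exists n : nat, (1 <= n)%nat /\ Nat.iter n G x = x.

(* Main.v *)
From Coquelicot Require Import Coquelicot.
From Stdlib Require Import Reals Lra Lia List ZArith Classical ClassicalEpsilon FunctionalExtensionality.
Require Import Defs.
From Stdlib Require Import Reals.
Import ListNotations.
Open Scope R_scope.

Definition term (a : nat -> nat) (k : nat) : R := INR (a k) * (/5)^(S k).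
Definition Sx (a : nat -> nat) : R := Series (term a).
Definition bnd (a : nat -> nat) := forall k, (a k <= 2)%nat.
Definition sh1 (a : nat -> nat) := fun k => a (S k).

Lemma ex_geo5 : ex_series (fun k => 2 * (/5)^(S k)).
Proof.
  apply ex_series_ext with (fun k => scal (2/5) ((/5)^k)).
  - intro k. unfold scal; simpl. unfold mult; simpl. field.
  - apply (ex_series_scal_l (K:=R_AbsRing) (V:=R_NormedModule)). apply ex_series_geom. rewrite Rabs_pos_eq; lra.
Qed.

Lemma Series_geo5 : Series (fun k => 2 * (/5)^(S k)) = /2.
Proof.
  rewrite (Series_ext _ (fun k => (2/5) * ((/5)^k))).
  - rewrite Series_scal_l. rewrite Series_geom. field. rewrite Rabs_pos_eq; lra.
  - intro k. simpl. field.
Qed.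

Lemma term_bnd a : bnd a -> forall k, 0 <= term a k <= 2 * (/5)^(S k).
Proof.
  intros H k. unfold term. pose proof (H k) as Hk. apply le_INR in Hk.
  assert (0 < (/5)^(S k)) by (apply pow_lt; lra).
  pose proof (pos_INR (a k)). simpl in Hk. split; nra.
Qed.

Lemma ex_term a : bnd a -> ex_series (term a).
Proof.
  intro H. apply (ex_series_le (K:=R_AbsRing) (V:=R_CompleteNormedModule) _ (fun k => 2 * (/5)^(S k))).
  - intro k. destruct (term_bnd a H k). change (norm (term a k)) with (Rabs (term a k)). rewrite Rabs_pos_eq; lra.
  - apply ex_geo5.
Qed.

Lemma bnd_sh1 a : bnd a -> bnd (sh1 a).
Proof. intros H k; apply H. Qed.

Lemma Sx_rec a : bnd a -> Sx a = INR (a 0%nat) / 5 + / 5 * Sx (sh1 a).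
Proof.
  intro H. unfold Sx. rewrite Series_incr_1 by (apply ex_term; auto).
  rewrite <- Series_scal_l. f_equal.
  - unfold term. simpl. field.
  - apply Series_ext. intro k. unfold term, sh1. simpl. ring.
Qed.

Lemma Sx_bounds a : bnd a -> 0 <= Sx a <= /2.
Proof.
  intro H. split.
  - unfold Sx. apply Rle_trans with (Series (fun _ : nat => 0)).
    + right. rewrite (Series_ext _ (fun n => 0 * 0)) by (intro; ring). rewrite Series_scal_l. ring.
    + apply Series_le. intro n. split; [lra| apply term_bnd; auto]. apply ex_term; auto.
  - rewrite <- Series_geo5. apply Series_le. apply term_bnd; auto. apply ex_geo5.
Qed.

Lemma pow_le1 : forall x n, 0 <= x <= 1 -> x ^ n <= 1.
Proof. intros x n H; induction n; simpl; [lra|]. assert (0 <= x^n) by (apply pow_le; lra). nra. Qed.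

Definition agree (a b : nat -> nat) (n : nat) := forall i, (i < n)%nat -> a i = b i.

Lemma ES1 : forall n a b, bnd a -> bnd b -> agree a b n -> Rabs (Sx a - Sx b) <= /2 * (/5)^n.
Proof.
  induction n; intros a b Ha Hb Hab.
  - simpl. pose proof (Sx_bounds a Ha). pose proof (Sx_bounds b Hb).
    apply Rabs_le; lra.
  - rewrite (Sx_rec a Ha), (Sx_rec b Hb).
    rewrite (Hab 0%nat) by lia.
    assert (Hs: agree (sh1 a) (sh1 b) n) by (intros i Hi; apply Hab; lia).
    specialize (IHn _ _ (bnd_sh1 a Ha) (bnd_sh1 b Hb) Hs).
    replace (INR (b 0%nat) / 5 + / 5 * Sx (sh1 a) - (INR (b 0%nat) / 5 + / 5 * Sx (sh1 b)))
      with (/5 * (Sx (sh1 a) - Sx (sh1 b))) by ring.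
    rewrite Rabs_mult, Rabs_pos_eq by lra. simpl. nra.
Qed.

Lemma ES2 : forall n a b, bnd a -> bnd b -> ~ agree a b n -> /10 * (/5)^n <= Rabs (Sx a - Sx b).
Proof.
  induction n; intros a b Ha Hb Hab.
  - exfalso. apply Hab. intros i Hi; lia.
  - rewrite (Sx_rec a Ha), (Sx_rec b Hb).
    assert (Hp: 0 < (/5)^n) by (apply pow_lt; lra).
    pose proof (Sx_bounds _ (bnd_sh1 a Ha)). pose proof (Sx_bounds _ (bnd_sh1 b Hb)).
    destruct (Nat.eq_dec (a 0%nat) (b 0%nat)) as [E|E].
    + rewrite E.
      assert (Hs: ~ agree (sh1 a) (sh1 b) n).
      { intro H'. apply Hab. intros i Hi. destruct i. auto. apply H'. lia. }
      specialize (IHn _ _ (bnd_sh1 a Ha) (bnd_sh1 b Hb) Hs).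
      replace (INR (b 0%nat) / 5 + / 5 * Sx (sh1 a) - (INR (b 0%nat) / 5 + / 5 * Sx (sh1 b)))
        with (/5 * (Sx (sh1 a) - Sx (sh1 b))) by ring.
      rewrite Rabs_mult, (Rabs_pos_eq (/5)) by lra. simpl. nra.
    + assert (Hd: 1 <= Rabs (INR (a 0%nat) - INR (b 0%nat))).
      { destruct (Nat.lt_ge_cases (a 0%nat) (b 0%nat)) as [L|L].
        - assert (INR (S (a 0%nat)) <= INR (b 0%nat)) by (apply le_INR; lia). rewrite S_INR in H1.
          rewrite Rabs_left1; lra.
        - assert (INR (S (b 0%nat)) <= INR (a 0%nat)) by (apply le_INR; lia). rewrite S_INR in H1.
          rewrite Rabs_pos_eq; lra. }
      assert (Hq: (/5)^(S n) <= /5) by (simpl; assert ((/5)^n <= 1) by (apply pow_le1; lra); nra).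
      assert (Rabs (INR (a 0%nat) / 5 + / 5 * Sx (sh1 a) - (INR (b 0%nat) / 5 + / 5 * Sx (sh1 b)))
              >= /5 * Rabs (INR (a 0%nat) - INR (b 0%nat)) - /5 * Rabs (Sx (sh1 a) - Sx (sh1 b))).
      { replace (INR (a 0%nat) / 5 + / 5 * Sx (sh1 a) - (INR (b 0%nat) / 5 + / 5 * Sx (sh1 b)))
          with (/5 * (INR (a 0%nat) - INR (b 0%nat)) + /5 * (Sx (sh1 a) - Sx (sh1 b))) by field.
        pose proof (Rabs_triang_inv (/5 * (INR (a 0%nat) - INR (b 0%nat))) (- (/5 * (Sx (sh1 a) - Sx (sh1 b))))).
        rewrite Rabs_Ropp in H1. rewrite !Rabs_mult, Rabs_pos_eq in * by lra.
        replace (/ 5 * (INR (a 0%nat) - INR (b 0%nat)) - - (/ 5 * (Sx (sh1 a) - Sx (sh1 b)))) with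
          (/ 5 * (INR (a 0%nat) - INR (b 0%nat)) + / 5 * (Sx (sh1 a) - Sx (sh1 b))) in H1 by ring.
        lra. }
      assert (Rabs (Sx (sh1 a) - Sx (sh1 b)) <= /2) by (apply Rabs_le; lra).
      lra.
Qed.

Definition b2n (b : bool) : nat := if b then 1%nat else 0%nat.
Definition pref (a : nat -> nat) (n : nat) : list nat := map a (seq 0 n).
Definition prefb (a : nat -> bool) (n : nat) : list bool := map a (seq 0 n).

Lemma pref_length a n : length (pref a n) = n.
Proof. unfold pref. rewrite length_map, length_seq. reflexivity. Qed.
Lemma prefb_length a n : length (prefb a n) = n.
Proof. unfold prefb. rewrite length_map, length_seq. reflexivity. Qed.

Lemma pref_S a n : pref a (S n) = pref a n ++ [a n].
Proof. unfold pref. rewrite seq_S, map_app. reflexivity. Qed.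
Lemma prefb_S a n : prefb a (S n) = prefb a n ++ [a n].
Proof. unfold prefb. rewrite seq_S, map_app. reflexivity. Qed.

Lemma pref_S' a n : pref a (S n) = a 0%nat :: pref (fun i => a (S i)) n.
Proof. unfold pref. simpl. f_equal. rewrite <- seq_shift, map_map. reflexivity. Qed.
Lemma prefb_S' a n : prefb a (S n) = a 0%nat :: prefb (fun i => a (S i)) n.
Proof. unfold prefb. simpl. f_equal. rewrite <- seq_shift, map_map. reflexivity. Qed.

Lemma nth_pref a n i : (i < n)%nat -> nth i (pref a n) 0%nat = a i.
Proof. intro H. unfold pref. rewrite nth_indep with (d' := a 0%nat) by (rewrite length_map, length_seq; auto).
  rewrite map_nth, seq_nth by auto. reflexivity. Qed.
Lemma nth_prefb a n i : (i < n)%nat -> nth i (prefb a n) false = a i.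
Proof. intro H. unfold prefb. rewrite nth_indep with (d' := a 0%nat) by (rewrite length_map, length_seq; auto).
  rewrite map_nth, seq_nth by auto. reflexivity. Qed.

Lemma pref_agree a b n : agree a b n -> pref a n = pref b n.
Proof. intro H. unfold pref. apply map_ext_in. intros i Hi. apply in_seq in Hi. apply H. lia. Qed.

Lemma agree_pref a b n : pref a n = pref b n -> agree a b n.
Proof. intros H i Hi. rewrite <- (nth_pref a n i Hi), <- (nth_pref b n i Hi), H. reflexivity. Qed.

Lemma agree_le a b n m : (m <= n)%nat -> agree a b n -> agree a b m.
Proof. intros H1 H2 i Hi. apply H2. lia. Qed.

Lemma agree_sym a b n : agree a b n -> agree b a n.
Proof. intros H i Hi. symmetry. auto. Qed.

Lemma agree_trans a b c n : agree a b n -> agree b c n -> agree a c n.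
Proof. intros H1 H2 i Hi. rewrite H1, H2; auto. Qed.

Definition app_seq (l : list nat) (f : nat -> nat) (i : nat) : nat :=
  if (i <? length l)%nat then nth i l 0%nat else f (i - length l)%nat.

Lemma app_seq_nil f i : app_seq [] f i = f i.
Proof. unfold app_seq. simpl. f_equal. lia. Qed.

Lemma app_seq_cons d l f i : app_seq (d :: l) f i = match i with 0%nat => d | S j => app_seq l f j end.
Proof. unfold app_seq. destruct i; simpl; auto. Qed.

Lemma app_seq_app l1 l2 f i : app_seq (l1 ++ l2) f i = app_seq l1 (app_seq l2 f) i.
Proof.
  revert i; induction l1; intro i.
  - rewrite app_seq_nil. reflexivity.
  - simpl. rewrite !app_seq_cons. destruct i; auto.
Qed.

Lemma pref_app_seq l f n : pref (app_seq l f) (length l + n) = l ++ pref f n.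
Proof.
  revert f; induction l; intro f.
  - simpl. unfold pref. apply map_ext. intro; apply app_seq_nil.
  - simpl length. rewrite Nat.add_succ_l, pref_S'. simpl. f_equal.
    rewrite <- IHl. unfold pref. apply map_ext. intro i. rewrite app_seq_cons. reflexivity.
Qed.

Lemma agree_app_seq l f g n : agree f g n -> agree (app_seq l f) (app_seq l g) (length l + n).
Proof.
  intros H i Hi. unfold app_seq. destruct (Nat.ltb_spec i (length l)); auto. apply H. lia.
Qed.

Lemma app_seq_lt l f i : (i < length l)%nat -> app_seq l f i = nth i l 0%nat.
Proof. intro H. unfold app_seq. destruct (Nat.ltb_spec i (length l)); auto; lia. Qed.
Lemma app_seq_ge l f i : (length l <= i)%nat -> app_seq l f i = f (i - length l)%nat.
Proof. intro H. unfold app_seq. destruct (Nat.ltb_spec i (length l)); auto; lia. Qed.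

Lemma app_seq_agree_l l f g : agree (app_seq l f) (app_seq l g) (length l).
Proof. intros i Hi. rewrite !app_seq_lt; auto. Qed.

Fixpoint v (l : list bool) : nat := match l with [] => 0%nat | b :: l' => (b2n b + 2 * v l')%nat end.
Fixpoint inc (l : list bool) : list bool :=
  match l with [] => [] | false :: l' => true :: l' | true :: l' => false :: inc l' end.
Fixpoint dec (l : list bool) : list bool :=
  match l with [] => [] | true :: l' => false :: l' | false :: l' => true :: dec l' end.
Definition allones (l : list bool) := forallb (fun b => b) l.
Definition allzeros (l : list bool) := forallb negb l.

Lemma length_inc l : length (inc l) = length l.
Proof. induction l as [|[] l IH]; simpl; auto. Qed.
Lemma length_dec l : length (dec l) = length l.
Proof. induction l as [|[] l IH]; simpl; auto. Qed.
Lemma dec_inc l : dec (inc l) = l.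
Proof. induction l as [|[] l IH]; simpl; auto; rewrite IH; auto. Qed.
Lemma inc_dec l : inc (dec l) = l.
Proof. induction l as [|[] l IH]; simpl; auto; rewrite IH; auto. Qed.
Lemma allzeros_inc l : allzeros (inc l) = allones l.
Proof. induction l as [|[] l IH]; simpl; auto. Qed.
Lemma allones_dec l : allones (dec l) = allzeros l.
Proof. induction l as [|[] l IH]; simpl; auto. Qed.
Lemma inc_allones l : allones l = true -> inc l = repeat false (length l).
Proof. induction l as [|[] l IH]; simpl; intros; auto; try discriminate. rewrite IH; auto. Qed.
Lemma allones_repeat l : allones l = true -> l = repeat true (length l).
Proof. induction l as [|[] l IH]; simpl; intros; auto; try discriminate. rewrite IH at 1; auto. Qed.
Lemma allzeros_repeat l : allzeros l = true -> l = repeat false (length l).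
Proof. induction l as [|[] l IH]; simpl; intros; auto; try discriminate. rewrite IH at 1; auto. Qed.
Lemma allones_rep n : allones (repeat true n) = true.
Proof. induction n; simpl; auto. Qed.
Lemma allzeros_rep n : allzeros (repeat false n) = true.
Proof. induction n; simpl; auto. Qed.

Lemma v_lt l : (v l < 2 ^ length l)%nat.
Proof. induction l as [|[] l IH]; simpl; lia. Qed.
Lemma v_inc l : allones l = false -> v (inc l) = S (v l).
Proof. induction l as [|[] l IH]; simpl; intros; try discriminate; auto. rewrite IH; auto. lia. Qed.
Lemma v_app l b : v (l ++ [b]) = (v l + 2 ^ length l * b2n b)%nat.
Proof. induction l as [|c l IH]; simpl. lia. rewrite IH. lia. Qed.
Lemma v_repeat_false n : v (repeat false n) = 0%nat.
Proof. induction n; simpl; auto. rewrite IHn; auto. Qed.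
Lemma v_repeat_true n : (v (repeat true n) + 1 = 2 ^ n)%nat.
Proof. induction n; simpl; auto. lia. Qed.

Fixpoint flipl (l : list bool) : list bool :=
  match l with [] => [] | b :: l' => match l' with [] => [negb b] | _ => b :: flipl l' end end.
Definition vf l := v (flipl l).

Lemma length_flipl l : length (flipl l) = length l.
Proof. induction l as [|b l IH]; auto. destruct l as [|c l]; auto. change (flipl (b :: c :: l)) with (b :: flipl (c :: l)). transitivity (S (length (flipl (c :: l)))); [reflexivity|]. rewrite IH. reflexivity. Qed.

Lemma vf_lt l : (vf l < 2 ^ length l)%nat.
Proof. unfold vf. rewrite <- length_flipl. apply v_lt. Qed.

Definition badw (l : list bool) := l = repeat true (length l - 1) ++ [false].

Lemma flipl_cons b l : l <> [] -> flipl (b :: l) = b :: flipl l.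
Proof. intro H. destruct l; [congruence|]. reflexivity. Qed.

Lemma inc_nil l : inc l = [] -> l = [].
Proof. destruct l as [|[] l]; simpl; auto; discriminate. Qed.

Lemma vf_inc l : l <> [] -> ~ badw l -> vf (inc l) = S (vf l).
Proof.
  unfold vf, badw. induction l as [|b l IH]; intros H1 H2; [congruence|].
  destruct (list_eq_dec Bool.bool_dec l []) as [E|E].
  - subst l. destruct b; simpl in *; auto. exfalso; apply H2; reflexivity.
  - destruct b.
    + simpl inc. rewrite !flipl_cons; auto.
      2:{ intro X. apply inc_nil in X. auto. }
      simpl v. rewrite IH; auto; [simpl; lia|].
      intro Hb. apply H2. 
      destruct l; [congruence|]. simpl length in *. replace (S (length l) - 1)%nat with (length l) in Hb by lia.
      replace (S (S (length l)) - 1)%nat with (S (length l)) by lia.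
      rewrite Hb at 1. reflexivity.
    + simpl inc. rewrite !flipl_cons; auto.
Qed.

Fixpoint odo (z : nat -> bool) (i : nat) : bool :=
  match i with 0%nat => negb (z 0%nat) | S j => if z 0%nat then odo (fun k => z (S k)) j else z (S j) end.
Fixpoint dodo (z : nat -> bool) (i : nat) : bool :=
  match i with 0%nat => negb (z 0%nat) | S j => if z 0%nat then z (S j) else dodo (fun k => z (S k)) j end.

Lemma prefb_odo z k : prefb (odo z) k = inc (prefb z k).
Proof.
  revert z; induction k; intro z; auto.
  rewrite !prefb_S'. simpl. destruct (z 0%nat) eqn:E.
  - f_equal. apply IHk.
  - f_equal.
Qed.

Lemma prefb_dodo z k : prefb (dodo z) k = dec (prefb z k).
Proof.
  revert z; induction k; intro z; auto.
  rewrite !prefb_S'. simpl. destruct (z 0%nat) eqn:E.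
  - f_equal.
  - f_equal. apply IHk.
Qed.

Lemma prefb_ext a b k : prefb a k = prefb b k -> forall i, (i < k)%nat -> a i = b i.
Proof. intros H i Hi. rewrite <- (nth_prefb a k i Hi), <- (nth_prefb b k i Hi), H. auto. Qed.

Lemma odo_dodo z i : odo (dodo z) i = z i.
Proof.
  apply (prefb_ext _ _ (S i)); [|lia]. rewrite prefb_odo, prefb_dodo, inc_dec. auto.
Qed.
Lemma dodo_odo z i : dodo (odo z) i = z i.
Proof.
  apply (prefb_ext _ _ (S i)); [|lia]. rewrite prefb_dodo, prefb_odo, dec_inc. auto.
Qed.

Lemma prefb_agree a b k : (forall i, (i < k)%nat -> a i = b i) -> prefb a k = prefb b k.
Proof. intro H. unfold prefb. apply map_ext_in. intros i Hi. apply in_seq in Hi. apply H. lia. Qed.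

Lemma odo_agree a b k : (forall i, (i < k)%nat -> a i = b i) -> forall i, (i < k)%nat -> odo a i = odo b i.
Proof. intros H. apply prefb_ext. rewrite !prefb_odo. f_equal. apply prefb_agree; auto. Qed.
Lemma dodo_agree a b k : (forall i, (i < k)%nat -> a i = b i) -> forall i, (i < k)%nat -> dodo a i = dodo b i.
Proof. intros H. apply prefb_ext. rewrite !prefb_dodo. f_equal. apply prefb_agree; auto. Qed.

Definition lamZ (s : list bool) : R := (2 - INR (vf s) / 2 ^ length s) / 2 ^ length s.

Lemma pow2_pos k : 0 < 2 ^ k.
Proof. apply pow_lt; lra. Qed.

Lemma INR_pow2 k : INR (2 ^ k) = 2 ^ k.
Proof. rewrite pow_INR. simpl. f_equal; lra. Qed.

Lemma vf_ltR s : INR (vf s) < 2 ^ length s.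
Proof. rewrite <- INR_pow2. apply lt_INR. apply vf_lt. Qed.

Lemma lamZ_lo s : / 2 ^ length s < lamZ s.
Proof.
  unfold lamZ. pose proof (vf_ltR s). pose proof (pow2_pos (length s)).
  replace (/ 2 ^ length s) with (1 / 2 ^ length s) by (field; lra). unfold Rdiv at 2 3.
  apply Rmult_lt_compat_r. apply Rinv_0_lt_compat; lra.
  assert (INR (vf s) / 2 ^ length s < 1). { apply Rmult_lt_reg_r with (2 ^ length s); auto. unfold Rdiv. rewrite Rmult_assoc, Rinv_l; lra. }
  lra.
Qed.

Lemma lamZ_hi s : lamZ s <= 2 / 2 ^ length s.
Proof.
  unfold lamZ. pose proof (pos_INR (vf s)). pose proof (pow2_pos (length s)).
  unfold Rdiv. apply Rmult_le_compat_r. left; apply Rinv_0_lt_compat; lra.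
  assert (0 <= INR (vf s) * / 2 ^ length s) by (apply Rmult_le_pos; [lra| left; apply Rinv_0_lt_compat; lra]). lra.
Qed.

Lemma lamZ_pos s : 0 < lamZ s.
Proof. pose proof (lamZ_lo s). pose proof (pow2_pos (length s)). assert (0 < / 2 ^ length s) by (apply Rinv_0_lt_compat; lra). lra. Qed.

Lemma lamZ_snoc s b : lamZ (s ++ [b]) < lamZ s.
Proof.
  pose proof (lamZ_hi (s ++ [b])). pose proof (lamZ_lo s). rewrite length_app in H. simpl length in H.
  rewrite Nat.add_1_r in H. simpl in H. pose proof (pow2_pos (length s)).
  replace (2 / (2 * 2 ^ length s)) with (/ 2 ^ length s) in H by (field; lra). lra.
Qed.

Lemma lamZ_inc s : s <> [] -> ~ badw s -> lamZ (inc s) < lamZ s.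
Proof.
  intros H1 H2. unfold lamZ. rewrite length_inc, vf_inc by auto. rewrite S_INR.
  pose proof (pow2_pos (length s)).
  apply Rmult_lt_compat_r. apply Rinv_0_lt_compat; lra.
  unfold Rdiv. assert (0 < / 2 ^ length s) by (apply Rinv_0_lt_compat; lra). nra.
Qed.

Definition rankZ (s : list bool) : Z := (1 - (Z.of_nat (2 ^ length s) - Z.of_nat (v s)))%Z.

Definition theta (r : Z) : R :=
  if (r <? 0)%Z then / 2 - / (4 * (1 - IZR r)) else / (IZR r + 3).

Lemma theta_bounds r : 0 < theta r <= /2.
Proof.
  unfold theta. destruct (Z.ltb_spec r 0).
  - apply IZR_lt in H. assert (1 < 1 - IZR r) by lra.
    assert (0 < / (4 * (1 - IZR r)) < /4). { split. apply Rinv_0_lt_compat; lra. apply Rinv_lt_contravar; nra. }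
    lra.
  - apply IZR_le in H. split. apply Rinv_0_lt_compat; lra.
    apply Rinv_le_contravar; lra.
Qed.

Lemma theta_dec r : theta (r + 1) < theta r.
Proof.
  unfold theta. rewrite plus_IZR.
  destruct (Z.ltb_spec (r + 1) 0); destruct (Z.ltb_spec r 0); try lia.
  - apply IZR_lt in H. apply IZR_lt in H0.
    assert (/ (4 * (1 - IZR r)) < / (4 * (1 - (IZR r + 1)))).
    { apply Rinv_lt_contravar; nra. } lra.
  - assert (r = -1)%Z by lia. subst r. simpl. 
    replace (IZR (-1) + 1) with 0 by (simpl; lra). replace (IZR (-1)) with (-1) by (simpl; lra).
    replace (0 + 3) with 3 by lra. 
    assert (/ 3 < / 2 - / (4 * (1 - -1))). { replace (4 * (1 - -1)) with 8 by lra. 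
      assert (/3 = 1/3) by lra. assert (/8 = 1/8) by lra. assert (/2 = 1/2) by lra. lra. } lra.
  - apply IZR_le in H0. apply Rinv_lt_contravar; nra.
Qed.

Definition muZ (s : list bool) (L : nat) : R := lamZ s * theta (rankZ s) ^ (S L).
Definition lamP (n : nat) : R := (/2) ^ n.
Definition muP (n : nat) (L : nat) : R := lamP n * theta (Z.of_nat n) ^ (S L).

Fixpoint zl (s : list bool) (l : list nat) : R :=
  match l with
  | [] => lamZ s
  | d :: l' => if Nat.eqb d 2 then muZ s (length l') else zl (s ++ [Nat.eqb d 1]) l'
  end.
Fixpoint pl (n : nat) (l : list nat) : R :=
  match l with
  | [] => lamP n
  | d :: l' => if Nat.eqb d 0 then pl (S n) l' else muP n (length l')
  end.
Definition lam (l : list nat) : R :=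
  match l with [] => 4 | d :: l' => if Nat.eqb d 0 then zl [] l' else pl 0 l' end.

Lemma lamP_pos n : 0 < lamP n.
Proof. apply pow_lt; lra. Qed.

Lemma pow_pos_lt1 x n : 0 < x <= /2 -> 0 < x ^ (S n) < 1.
Proof.
  intro H. split. apply pow_lt; lra.
  induction n. simpl; lra. simpl in *. assert (0 < x ^ n) by (apply pow_lt; lra). nra.
Qed.

Lemma muZ_pos s L : 0 < muZ s L.
Proof. unfold muZ. pose proof (lamZ_pos s). pose proof (pow_pos_lt1 _ L (theta_bounds (rankZ s))). nra. Qed.
Lemma muP_pos n L : 0 < muP n L.
Proof. unfold muP. pose proof (lamP_pos n). pose proof (pow_pos_lt1 _ L (theta_bounds (Z.of_nat n))). nra. Qed.

Lemma muZ_S s L : muZ s (S L) < muZ s L.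
Proof. unfold muZ. pose proof (lamZ_pos s). pose proof (theta_bounds (rankZ s)).
  pose proof (pow_pos_lt1 _ L (theta_bounds (rankZ s))). 
  change (theta (rankZ s) ^ S (S L)) with (theta (rankZ s) * theta (rankZ s) ^ (S L)).
  apply Rmult_lt_compat_l; auto. nra. Qed.
Lemma muP_S n L : muP n (S L) < muP n L.
Proof. unfold muP. pose proof (lamP_pos n). pose proof (theta_bounds (Z.of_nat n)).
  pose proof (pow_pos_lt1 _ L (theta_bounds (Z.of_nat n))). 
  change (theta (Z.of_nat n) ^ S (S L)) with (theta (Z.of_nat n) * theta (Z.of_nat n) ^ (S L)).
  apply Rmult_lt_compat_l; auto. nra. Qed.
Lemma muZ_0 s : muZ s 0 < lamZ s.
Proof. unfold muZ. pose proof (lamZ_pos s). pose proof (theta_bounds (rankZ s)). simpl. nra. Qed.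
Lemma muP_0 n : muP n 0 < lamP n.
Proof. unfold muP. pose proof (lamP_pos n). pose proof (theta_bounds (Z.of_nat n)). simpl. nra. Qed.

Lemma zl_pos s l : 0 < zl s l.
Proof. revert s; induction l; intro s; simpl. apply lamZ_pos. destruct (Nat.eqb a 2). apply muZ_pos. apply IHl. Qed.
Lemma pl_pos n l : 0 < pl n l.
Proof. revert n; induction l; intro n; simpl. apply lamP_pos. destruct (Nat.eqb a 0). apply IHl. apply muP_pos. Qed.
Lemma lam_pos l : 0 < lam l.
Proof. destruct l; simpl. lra. destruct (Nat.eqb n 0). apply zl_pos. apply pl_pos. Qed.

Lemma zl_snoc s l c : zl s (l ++ [c]) <= zl s l.
Proof.
  revert s; induction l; intro s; simpl.
  - destruct (Nat.eqb c 2). left; apply muZ_0. left; apply lamZ_snoc.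
  - destruct (Nat.eqb a 2). rewrite length_app. simpl length. rewrite Nat.add_1_r. left; apply muZ_S. apply IHl.
Qed.
Lemma lamP_S n : lamP (S n) < lamP n.
Proof. unfold lamP. simpl. pose proof (lamP_pos n). unfold lamP in H. lra. Qed.
Lemma pl_snoc n l c : pl n (l ++ [c]) <= pl n l.
Proof.
  revert n; induction l; intro n; simpl.
  - destruct (Nat.eqb c 0). left; apply lamP_S. left; apply muP_0.
  - destruct (Nat.eqb a 0). apply IHl. rewrite length_app. simpl length. rewrite Nat.add_1_r. left; apply muP_S.
Qed.
Lemma lam_snoc l c : lam (l ++ [c]) <= lam l.
Proof.
  destruct l; simpl.
  - destruct (Nat.eqb c 0); simpl. unfold lamZ. simpl. unfold vf; simpl. lra. unfold lamP; simpl; lra.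
  - destruct (Nat.eqb n 0). apply zl_snoc. apply pl_snoc.
Qed.

Lemma lam_mono a n m : (n <= m)%nat -> lam (pref a m) <= lam (pref a n).
Proof.
  induction 1. lra. rewrite pref_S. eapply Rle_trans. apply lam_snoc. auto.
Qed.

Lemma least_diff a b : (exists n, a n <> b n) -> exists n, a n <> b n /\ agree a b n.
Proof.
  intro H. apply NNPP. intro H'. destruct H as [n Hn]. apply Hn.
  assert (forall m, agree a b m).
  { induction m. intros i Hi; lia. intros i Hi.
    destruct (Nat.eq_dec i m). subst. apply NNPP. intro X. apply H'. exists m; auto.
    apply IHm; lia. }
  apply (H (S n)); lia.
Qed.

Definition D (a b : nat -> nat) : R :=
  match excluded_middle_informative (exists n, a n <> b n) with
  | left h => lam (pref a (proj1_sig (constructive_indefinite_description _ (least_diff a b h))))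
  | right _ => 0
  end.

Lemma fd_unique a b n m : agree a b n -> a n <> b n -> agree a b m -> a m <> b m -> n = m.
Proof.
  intros H1 H2 H3 H4. destruct (Nat.lt_trichotomy n m) as [L|[L|L]]; auto.
  - exfalso. apply H2. apply H3. auto.
  - exfalso. apply H4. apply H1. auto.
Qed.

Lemma D_eq a b n : agree a b n -> a n <> b n -> D a b = lam (pref a n).
Proof.
  intros H1 H2. unfold D. destruct excluded_middle_informative as [h|h].
  - destruct constructive_indefinite_description as [m [Hm1 Hm2]]. simpl.
    rewrite (fd_unique a b m n); auto.
  - exfalso. apply h. eauto.
Qed.

Lemma D_zero a b : (forall n, a n = b n) -> D a b = 0.
Proof.
  intro H. unfold D. destruct excluded_middle_informative as [h|h]; auto.
  exfalso. destruct h as [n Hn]. auto.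
Qed.

Lemma D_cases a b : (forall n, a n = b n) \/ exists n, agree a b n /\ a n <> b n /\ D a b = lam (pref a n).
Proof.
  destruct (classic (exists n, a n <> b n)) as [h|h].
  - right. destruct (least_diff a b h) as [n [Hn1 Hn2]]. exists n. repeat split; auto. apply D_eq; auto.
  - left. intro n. apply NNPP. intro X. apply h. eauto.
Qed.

Lemma D_nonneg a b : 0 <= D a b.
Proof.
  destruct (D_cases a b) as [H|[n [_ [_ H]]]]. rewrite D_zero; auto; lra. rewrite H. left; apply lam_pos.
Qed.

Lemma D_zero_iff a b : D a b = 0 -> forall n, a n = b n.
Proof.
  intro H. destruct (D_cases a b) as [H'|[n [_ [_ H']]]]; auto. rewrite H' in H. pose proof (lam_pos (pref a n)). lra.
Qed.

Lemma D_sym a b : D a b = D b a.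
Proof.
  destruct (D_cases a b) as [H|[n [H1 [H2 H3]]]].
  - rewrite !D_zero; auto.
  - rewrite H3. rewrite (D_eq b a n). rewrite (pref_agree a b n); auto. apply agree_sym; auto. auto.
Qed.

Lemma D_small a b N : D a b < lam (pref a N) -> agree a b N.
Proof.
  intro H. destruct (D_cases a b) as [H'|[n [H1 [H2 H3]]]].
  - intros i _. auto.
  - rewrite H3 in H. destruct (Nat.le_gt_cases N n).
    + apply agree_le with n; auto.
    + pose proof (lam_mono a n N ltac:(lia)). lra.
Qed.

Lemma D_agree a b N : agree a b N -> D a b <= lam (pref a N).
Proof.
  intro H. destruct (D_cases a b) as [H'|[n [H1 [H2 H3]]]].
  - rewrite D_zero; auto. left; apply lam_pos.
  - rewrite H3. apply lam_mono. destruct (Nat.le_gt_cases N n); auto. exfalso. apply H2. apply H. auto.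
Qed.

Lemma D_ultra a b c : D a c <= Rmax (D a b) (D b c).
Proof.
  destruct (D_cases a c) as [H|[n [H1 [H2 H3]]]].
  - rewrite D_zero; auto. apply Rle_trans with (D a b). apply D_nonneg. apply Rmax_l.
  - rewrite H3.
    destruct (D_cases a b) as [Hab|[m [M1 [M2 M3]]]].
    +
      destruct (D_cases b c) as [Hbc|[k [K1 [K2 K3]]]].
      * exfalso. apply H2. rewrite Hab, Hbc. auto.
      * eapply Rle_trans; [|apply Rmax_r]. rewrite K3.
        assert (k = n). { apply fd_unique with a c; auto. intros i Hi; rewrite Hab; auto. rewrite Hab; auto. }
        subst k. right. f_equal. apply pref_agree. intros i Hi; auto.
    + destruct (Nat.le_gt_cases m n).
      * eapply Rle_trans; [|apply Rmax_l]. rewrite M3. apply lam_mono. auto.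
      * (* m > n : a,b agree up to m > n, so b n = a n <> c n, and b c agree up to n *)
        destruct (D_cases b c) as [Hbc|[k [K1 [K2 K3]]]].
        -- exfalso. apply H2. rewrite <- Hbc. apply M1. auto.
        -- eapply Rle_trans; [|apply Rmax_r]. rewrite K3.
           assert (k = n). { apply fd_unique with b c; auto. intros i Hi. rewrite <- M1 by lia. apply H1; auto.
                             rewrite <- M1 by lia. auto. }
           subst k. right. f_equal. apply pref_agree. intros i Hi. apply M1. lia.
Qed.

Lemma D_triangle a b c : D a c <= D a b + D b c.
Proof.
  pose proof (D_ultra a b c). pose proof (D_nonneg a b). pose proof (D_nonneg b c).
  unfold Rmax in H. destruct (Rle_dec (D a b) (D b c)); lra.
Qed.

Inductive bid := Zb (r : list bool) | Pb (n : nat).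
Inductive pt := Zend (z : nat -> bool) | Bush (b : bid) (t : nat -> bool) | Pfix.

Definition hdr (b : bid) : list nat :=
  match b with Zb r => 0%nat :: (map b2n r ++ [0%nat; 2%nat]) | Pb n => 1%nat :: (repeat 0%nat n ++ [2%nat]) end.
Definition bits (t : nat -> bool) : nat -> nat := fun i => b2n (t i).
Definition code (x : pt) : nat -> nat :=
  match x with
  | Zend z => app_seq [0%nat] (bits z)
  | Bush b t => app_seq (hdr b) (bits t)
  | Pfix => app_seq [1%nat] (fun _ => 0%nat)
  end.

Definition bsucc (b : bid) : bid :=
  match b with
  | Zb r => if allones r then match r with [] => Pb 0 | _ :: r' => Zb (repeat false (length r')) end else Zb (inc r)
  | Pb n => Pb (S n)
  end.
Definition bpred (b : bid) : bid :=
  match b with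
  | Zb r => if allzeros r then Zb (repeat true (S (length r))) else Zb (dec r)
  | Pb 0 => Zb []
  | Pb (S n) => Pb n
  end.
Definition step (x : pt) : pt :=
  match x with Zend z => Zend (odo z) | Bush b t => Bush (bsucc b) t | Pfix => Pfix end.
Definition stepi (x : pt) : pt :=
  match x with Zend z => Zend (dodo z) | Bush b t => Bush (bpred b) t | Pfix => Pfix end.

Lemma bpred_bsucc b : bpred (bsucc b) = b.
Proof.
  destruct b as [r|n]; simpl; auto.
  destruct (allones r) eqn:E.
  - destruct r as [|c r']; simpl; auto.
    rewrite allzeros_rep. rewrite repeat_length. apply allones_repeat in E. rewrite E. simpl. auto.
  - simpl. rewrite allzeros_inc, E, dec_inc. auto.
Qed.

Lemma bsucc_bpred b : bsucc (bpred b) = b.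
Proof.
  destruct b as [r|[|n]]; simpl; auto.
  destruct (allzeros r) eqn:E.
  - simpl. rewrite allones_rep. simpl. apply allzeros_repeat in E. rewrite repeat_length. rewrite E. rewrite repeat_length. auto.
  - simpl. rewrite allones_dec, E, inc_dec. auto.
Qed.

Lemma step_stepi x : step (stepi x) = x.
Proof.
  destruct x; simpl; auto. f_equal. apply functional_extensionality; intro; apply odo_dodo.
  rewrite bsucc_bpred; auto.
Qed.
Lemma stepi_step x : stepi (step x) = x.
Proof.
  destruct x; simpl; auto. f_equal. apply functional_extensionality; intro; apply dodo_odo.
  rewrite bpred_bsucc; auto.
Qed.

Lemma b2n_le b : (b2n b <= 1)%nat.
Proof. destruct b; simpl; lia. Qed.

Lemma code0_Z z : code (Zend z) 0 = 0%nat. Proof. reflexivity. Qed.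
Lemma codeS_Z z j : code (Zend z) (S j) = b2n (z j).
Proof. simpl. rewrite app_seq_cons, app_seq_nil. reflexivity. Qed.
Lemma code0_P : code Pfix 0 = 1%nat. Proof. reflexivity. Qed.
Lemma codeS_P j : code Pfix (S j) = 0%nat.
Proof. simpl. rewrite app_seq_cons, app_seq_nil. reflexivity. Qed.

Lemma code_Zb r t i : code (Bush (Zb r) t) i =
  match i with 0%nat => 0%nat | S j => if (j <? length r)%nat then b2n (nth j r false)
     else if (j =? length r)%nat then 0%nat else if (j =? S (length r))%nat then 2%nat else b2n (t (j - S (S (length r))))%nat end.
Proof.
  simpl. rewrite app_seq_cons. destruct i; auto.
  rewrite app_seq_app. unfold app_seq at 1. rewrite length_map.
  destruct (Nat.ltb_spec i (length r)).
  - rewrite nth_indep with (d' := b2n false) by (rewrite length_map; auto). rewrite map_nth. auto.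
  - rewrite app_seq_cons. destruct (Nat.eqb_spec i (length r)).
    + subst. rewrite Nat.sub_diag. auto.
    + destruct (i - length r)%nat eqn:E; [lia|]. rewrite app_seq_cons.
      destruct (Nat.eqb_spec i (S (length r))).
      * destruct n0; [auto|lia].
      * destruct n0; [lia|]. rewrite app_seq_nil. unfold bits. f_equal. f_equal. lia.
Qed.

Lemma code_Pb n t i : code (Bush (Pb n) t) i =
  match i with 0%nat => 1%nat | S j => if (j <? n)%nat then 0%nat else if (j =? n)%nat then 2%nat
     else b2n (t (j - S n))%nat end.
Proof.
  simpl. rewrite app_seq_cons. destruct i; auto.
  rewrite app_seq_app. unfold app_seq at 1. rewrite repeat_length.
  destruct (Nat.ltb_spec i n).
  - rewrite nth_repeat. auto.
  - rewrite app_seq_cons. destruct (Nat.eqb_spec i n).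
    + subst. rewrite Nat.sub_diag. auto.
    + destruct (i - n)%nat eqn:E; [lia|]. rewrite app_seq_nil. unfold bits. f_equal. f_equal. lia.
Qed.

Lemma code_bnd x : bnd (code x).
Proof.
  intro k. destruct x as [z|[r|n] t|].
  - destruct k. rewrite code0_Z; lia. rewrite codeS_Z. pose proof (b2n_le (z k)). lia.
  - rewrite code_Zb. destruct k. lia.
    destruct (Nat.ltb_spec k (length r)). pose proof (b2n_le (nth k r false)). lia.
    destruct (Nat.eqb_spec k (length r)). lia. destruct (Nat.eqb_spec k (S (length r))). lia.
    pose proof (b2n_le (t (k - S (S (length r)))%nat)). lia.
  - rewrite code_Pb. destruct k. lia.
    destruct (Nat.ltb_spec k n). lia. destruct (Nat.eqb_spec k n). lia.
    pose proof (b2n_le (t (k - S n)%nat)). lia.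
  - destruct k. rewrite code0_P; lia. rewrite codeS_P; lia.
Qed.

Lemma b2n_inj b c : b2n b = b2n c -> b = c.
Proof. destruct b, c; simpl; auto; discriminate. Qed.

Lemma hdr_len b : length (hdr b) = match b with Zb r => (length r + 3)%nat | Pb n => (n + 2)%nat end.
Proof. destruct b; simpl; rewrite length_app; simpl. rewrite length_map. lia. rewrite repeat_length. lia. Qed.

Lemma nth_ext_bool (r r' : list bool) : length r = length r' -> (forall j, (j < length r)%nat -> nth j r false = nth j r' false) -> r = r'.
Proof. intros H1 H2. apply nth_ext with false false; auto. Qed.

Ltac crunch H := repeat (match type of H with
  | context [Nat.ltb ?a ?b] => destruct (Nat.ltb_spec a b)
  | context [Nat.eqb ?a ?b] => destruct (Nat.eqb_spec a b) end); try lia.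
Ltac kill2 := match goal with
  | H: b2n ?x = 2%nat |- _ => destruct x; discriminate
  | H: 2%nat = b2n ?x |- _ => destruct x; discriminate
  | H: b2n ?x = 0%nat, H' : 2%nat = 0%nat |- _ => discriminate
  | H: 0%nat = 2%nat |- _ => discriminate
  | H: 2%nat = 0%nat |- _ => discriminate
  | H: 1%nat = 2%nat |- _ => discriminate
  | H: 2%nat = 1%nat |- _ => discriminate
  end.

Lemma hdr_class b t y : agree (code y) (code (Bush b t)) (length (hdr b)) -> exists t', y = Bush b t'.
Proof.
  intro H. rewrite hdr_len in H. destruct b as [r|n].
  - assert (H0 := H 0%nat ltac:(lia)). assert (H2 := H (S (S (length r))) ltac:(lia)).
    rewrite (code_Zb r) in H0, H2. crunch H2.
    destruct y as [z|[r'|n'] t'|].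
    + rewrite codeS_Z in H2. kill2.
    + exists t'. f_equal. f_equal.
      assert (Hl: length r' = length r).
      { destruct (Nat.lt_trichotomy (length r') (length r)) as [L|[L|L]]; auto; exfalso.
        - assert (X := H (S (S (length r'))) ltac:(lia)). rewrite !code_Zb in X. crunch X; kill2.
        - rewrite code_Zb in H2. crunch H2; kill2. }
      apply nth_ext_bool; auto. intros j Hj. rewrite Hl in Hj.
      assert (X := H (S j) ltac:(lia)). rewrite !code_Zb in X. crunch X.
      apply b2n_inj; auto.
    + rewrite code_Pb in H0. discriminate.
    + rewrite code0_P in H0. discriminate.
  - assert (H0 := H 0%nat ltac:(lia)). assert (H2 := H (S n) ltac:(lia)).
    rewrite (code_Pb n) in H0, H2. crunch H2.
    destruct y as [z|[r'|n'] t'|].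
    + rewrite code0_Z in H0. discriminate.
    + rewrite code_Zb in H0. discriminate.
    + exists t'. f_equal. f_equal. rewrite code_Pb in H2.
      destruct (Nat.lt_trichotomy n' n) as [L|[L|L]]; auto; exfalso.
      * assert (X := H (S n') ltac:(lia)). rewrite !code_Pb in X. crunch X; kill2.
      * crunch H2; kill2.
    + rewrite codeS_P in H2. kill2.
Qed.

Lemma code_inj x y : (forall i, code x i = code y i) -> x = y.
Proof.
  intro H. destruct y as [z|b t|].
  - destruct x as [z'|b t|].
    + f_equal. apply functional_extensionality. intro j. specialize (H (S j)). rewrite !codeS_Z in H. apply b2n_inj; auto.
    + exfalso. destruct b as [r|n].
      * specialize (H (S (S (length r)))). rewrite code_Zb, codeS_Z in H.
        rewrite (proj2 (Nat.ltb_ge _ _)), (proj2 (Nat.eqb_neq _ _)), Nat.eqb_refl in H by lia.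
        pose proof (b2n_le (z (S (length r)))). lia.
      * specialize (H 0%nat). rewrite code_Pb in H. discriminate.
    + specialize (H 0%nat). discriminate.
  - destruct (hdr_class b t x) as [t' ->]. intros i Hi; auto.
    f_equal. apply functional_extensionality. intro j. specialize (H (length (hdr b) + j)%nat).
    simpl in H. rewrite !app_seq_ge in H by lia. replace (length (hdr b) + j - length (hdr b))%nat with j in H by lia.
    apply b2n_inj; auto.
  - destruct x as [z|[r|n] t|]; auto; exfalso.
    + specialize (H 0%nat). discriminate.
    + specialize (H 0%nat). rewrite code_Zb in H. discriminate.
    + specialize (H (S n)). rewrite code_Pb, codeS_P in H. rewrite Nat.ltb_irrefl, Nat.eqb_refl in H. discriminate.
Qed.

Definition ppos (x : pt) : R * R := (Sx (code x), 0).
Definition W (q : R * R) : Prop := exists x, q = ppos x.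

Lemma euclid_ppos x y : euclid (ppos x) (ppos y) = Rabs (Sx (code x) - Sx (code y)).
Proof.
  unfold euclid, ppos. simpl fst; simpl snd.
  replace ((Sx (code x) - Sx (code y)) ^ 2 + (0 - 0) ^ 2) with (Rsqr (Sx (code x) - Sx (code y))) by (unfold Rsqr; ring).
  apply sqrt_Rsqr_abs.
Qed.

Lemma EP1 x y n : agree (code x) (code y) n -> euclid (ppos x) (ppos y) <= /2 * (/5)^n.
Proof. intro H. rewrite euclid_ppos. apply ES1; auto; apply code_bnd. Qed.

Lemma EP2 x y n : euclid (ppos x) (ppos y) < /10 * (/5)^n -> agree (code x) (code y) n.
Proof.
  intro H. rewrite euclid_ppos in H. apply NNPP. intro X.
  pose proof (ES2 n _ _ (code_bnd x) (code_bnd y) X). lra.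
Qed.

Lemma pow5_pos n : 0 < (/5)^n.
Proof. apply pow_lt; lra. Qed.

Lemma ppos_inj x y : ppos x = ppos y -> x = y.
Proof.
  intro H. apply code_inj. intro i. apply (EP2 x y (S i)); [|lia].
  rewrite H. rewrite euclid_ppos. replace (Sx (code y) - Sx (code y)) with 0 by ring.
  rewrite Rabs_R0. pose proof (pow5_pos (S i)). lra.
Qed.

Definition pt_of (q : R * R) : pt := epsilon (inhabits Pfix) (fun x => ppos x = q).

Lemma pt_of_ppos x : pt_of (ppos x) = x.
Proof.
  unfold pt_of. apply ppos_inj. apply (epsilon_spec (inhabits Pfix) (fun y => ppos y = ppos x)). eauto.
Qed.

Lemma small_pow (c : R) e : 0 < c -> 0 < e -> exists n, c * (/5)^n < e.
Proof.
  intros Hc He. destruct (pow_lt_1_zero (/5) ltac:(rewrite Rabs_pos_eq; lra) (e / c) ltac:(apply Rdiv_lt_0_compat; lra)) as [N HN].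
  exists N. specialize (HN N (le_n _)). rewrite Rabs_pos_eq in HN by (left; apply pow5_pos).
  apply Rmult_lt_reg_l with (/c). apply Rinv_0_lt_compat; lra. rewrite <- Rmult_assoc, Rinv_l by lra.
  replace (/ c * e) with (e / c) by (unfold Rdiv; ring). lra.
Qed.

Definition symcont (f : pt -> pt) :=
  forall x N, exists M, forall y, agree (code x) (code y) M -> agree (code (f x)) (code (f y)) N.

Lemma cont_of_symcont f : symcont f -> continuous_on W euclid (fun q => ppos (f (pt_of q))).
Proof.
  intros Hf q [x ->] e He. destruct (small_pow (/2) e ltac:(lra) He) as [N HN].
  destruct (Hf x N) as [M HM]. exists (/10 * (/5)^M). split. pose proof (pow5_pos M). lra.
  intros q' [y ->] Hd. rewrite !pt_of_ppos. apply EP2 in Hd. apply HM in Hd. apply EP1 in Hd. lra.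
Qed.

Definition cyl (A : R * R -> Prop) (c : nat -> nat) (N : nat) (b : Prop) : R * R -> Prop :=
  fun q => A q /\ (agree (code (pt_of q)) c N <-> b).

Lemma cyl_open A c N b : (forall q, A q -> W q) -> ropen A euclid (cyl A c N b).
Proof.
  intro HA. split. intros q [H _]; auto.
  intros q [Aq Hq]. exists (/10 * (/5)^N). split. pose proof (pow5_pos N). lra.
  intros y Ay Hd. split; auto. destruct (HA q Aq) as [x ->]. destruct (HA y Ay) as [x' ->].
  rewrite pt_of_ppos in *. apply EP2 in Hd. rewrite <- Hq. split; intro X.
  - intros i Hi. rewrite Hd; auto.
  - intros i Hi. rewrite <- Hd; auto.
Qed.

Definition bit (k : nat) : nat := b2n (negb (Nat.eqb k 0)).
Definition has2 (u : nat -> nat) (i : nat) : bool := existsb (fun j => Nat.eqb (u j) 2) (seq 0 i).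
Definition hasnz (u : nat -> nat) (i : nat) : bool := existsb (fun j => negb (Nat.eqb (u j) 0)) (seq 0 i).
Definition PhiZ (u : nat -> nat) (i : nat) : nat :=
  if has2 u i then match i with 0%nat => 0%nat | S i' => if andb (Nat.eqb (u i') 2) (negb (has2 u i')) then 2%nat else bit (u i') end
  else if Nat.eqb (u i) 2 then 0%nat else bit (u i).
Definition PhiP (u : nat -> nat) (i : nat) : nat :=
  if Nat.eqb (u i) 0 then 0%nat else if hasnz u i then 1%nat else 2%nat.
Definition Phi (e : nat -> nat) : nat -> nat :=
  if Nat.eqb (e 0%nat) 2 then app_seq [1%nat] (PhiP (sh1 e)) else app_seq [0%nat] (PhiZ (sh1 e)).

Lemma has2_false u i : has2 u i = false <-> forall j, (j < i)%nat -> u j <> 2%nat.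
Proof.
  unfold has2. split.
  - intros H j Hj E. assert (existsb (fun j => Nat.eqb (u j) 2) (seq 0 i) = true).
    { apply existsb_exists. exists j. split. apply in_seq; lia. apply Nat.eqb_eq; auto. } congruence.
  - intro H. destruct (existsb _ _) eqn:E; auto. apply existsb_exists in E. destruct E as [j [Hj E]].
    apply in_seq in Hj. apply Nat.eqb_eq in E. exfalso; apply (H j); [lia|auto].
Qed.
Lemma has2_true u i j : (j < i)%nat -> u j = 2%nat -> has2 u i = true.
Proof. intros. destruct (has2 u i) eqn:E; auto. exfalso. apply has2_false with (j := j) in E; auto. Qed.
Lemma hasnz_false u i : hasnz u i = false <-> forall j, (j < i)%nat -> u j = 0%nat.
Proof.
  unfold hasnz. split.
  - intros H j Hj. destruct (Nat.eqb_spec (u j) 0); auto. exfalso.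
    assert (existsb (fun j => negb (Nat.eqb (u j) 0)) (seq 0 i) = true).
    { apply existsb_exists. exists j. split. apply in_seq; lia. destruct (Nat.eqb_spec (u j) 0); auto. } congruence.
  - intro H. destruct (existsb _ _) eqn:E; auto. apply existsb_exists in E. destruct E as [j [Hj E]].
    apply in_seq in Hj. rewrite H in E by lia. discriminate.
Qed.
Lemma hasnz_true u i j : (j < i)%nat -> u j <> 0%nat -> hasnz u i = true.
Proof. intros. destruct (hasnz u i) eqn:E; auto. exfalso. apply hasnz_false with (j := j) in E; auto. Qed.


Lemma existsb_agree (f g : nat -> bool) i : (forall j, (j < i)%nat -> f j = g j) -> existsb f (seq 0 i) = existsb g (seq 0 i).
Proof.
  intro H. induction i; auto. rewrite !seq_S, !existsb_app. rewrite IHi by (intros; apply H; lia).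
  simpl. rewrite H by lia. auto.
Qed.

Lemma Phi_agree e e' N : agree e e' N -> agree (Phi e) (Phi e') N.
Proof.
  intros H i Hi. assert (H0 : e 0%nat = e' 0%nat) by (apply H; lia).
  unfold Phi. rewrite H0. destruct i. destruct (Nat.eqb (e' 0%nat) 2); reflexivity.
  assert (Hs : forall j, (j <= i)%nat -> sh1 e j = sh1 e' j) by (intros; apply H; unfold sh1; lia).
  destruct (Nat.eqb (e' 0%nat) 2); rewrite !app_seq_cons, !app_seq_nil.
  - unfold PhiP, hasnz. rewrite (existsb_agree _ (fun j => negb (Nat.eqb (sh1 e' j) 0)) i) by (intros; rewrite Hs; auto; lia).
    rewrite Hs; auto.
  - unfold PhiZ, has2. rewrite (existsb_agree _ (fun j => Nat.eqb (sh1 e' j) 2) i) by (intros; rewrite Hs; auto; lia).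
    destruct i. rewrite Hs; auto.
    rewrite (existsb_agree _ (fun j => Nat.eqb (sh1 e' j) 2) i) by (intros; rewrite Hs; auto; lia).
    rewrite !Hs; auto.
Qed.

Lemma least_ex (P : nat -> Prop) : (exists n, P n) -> exists n, P n /\ forall m, (m < n)%nat -> ~ P m.
Proof.
  intros [n Hn]. apply NNPP. intro H.
  assert (forall k, forall m, (m < k)%nat -> ~ P m).
  { induction k. intros; lia. intros m Hm. destruct (Nat.eq_dec m k). subst. intro Pk. apply H. exists k. split; auto.
    apply IHk; lia. }
  apply (H0 (S n) n); auto.
Qed.

Lemma bit_b2n b : bit (b2n b) = b2n b.
Proof. destruct b; reflexivity. Qed.
Lemma bit01 k : (k <= 1)%nat -> bit k = k.
Proof. intro H. destruct k as [|[|]]; simpl; auto; lia. Qed.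

Lemma PhiCode e : (forall i, (e i <= 2)%nat) -> exists x, forall i, code x i = Phi e i.
Proof.
  intro He. unfold Phi. set (u := sh1 e). assert (Hu : forall i, (u i <= 2)%nat) by (intro; apply He).
  destruct (Nat.eqb_spec (e 0%nat) 2).
  - destruct (classic (exists n, u n <> 0%nat)) as [Hx|Hx].
    + destruct (least_ex _ Hx) as [n [Hn1 Hn2]].
      exists (Bush (Pb n) (fun i => negb (Nat.eqb (u (S n + i)%nat) 0))). intro i.
      rewrite code_Pb, app_seq_cons. destruct i; auto. rewrite app_seq_nil. unfold PhiP.
      destruct (Nat.ltb_spec i n).
      * assert (u i = 0%nat) by (apply NNPP; intro; apply (Hn2 i); auto). rewrite H0; auto.
      * destruct (Nat.eqb_spec i n).
        -- subst. rewrite (proj2 (Nat.eqb_neq _ _) Hn1). 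
           rewrite (proj2 (hasnz_false u n)); auto. intros j Hj. apply NNPP; intro; apply (Hn2 j); auto.
        -- replace (S n + (i - S n))%nat with i by lia. fold (bit (u i)).
           destruct (Nat.eqb_spec (u i) 0). rewrite e1; auto. rewrite (hasnz_true u i n); auto. 2: lia.
           unfold bit. rewrite (proj2 (Nat.eqb_neq _ _) n1). auto.
    + exists Pfix. intro i. rewrite app_seq_cons. destruct i; auto. rewrite codeS_P, app_seq_nil. unfold PhiP.
      assert (u i = 0%nat) by (apply NNPP; intro; apply Hx; eauto). rewrite H; auto.
  - destruct (classic (exists n, u n = 2%nat)) as [Hx|Hx].
    + destruct (least_ex _ Hx) as [j [Hj1 Hj2]].
      exists (Bush (Zb (prefb (fun i => negb (Nat.eqb (u i) 0)) j)) (fun i => negb (Nat.eqb (u (S j + i)%nat) 0))).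
      intro i. rewrite code_Zb, app_seq_cons. rewrite prefb_length. destruct i; auto. rewrite app_seq_nil. unfold PhiZ.
      destruct (Nat.ltb_spec i j).
      * rewrite nth_prefb by auto. rewrite (proj2 (has2_false u i)). 
        rewrite (proj2 (Nat.eqb_neq (u i) 2)) by (intro X; apply (Hj2 i); auto). reflexivity.
        intros k Hk X. apply (Hj2 k); auto; lia.
      * destruct (Nat.eqb_spec i j).
        -- subst. rewrite (proj2 (has2_false u j)). rewrite Hj1. auto. intros k Hk X. apply (Hj2 k); auto.
        -- rewrite (has2_true u i j) by (auto; lia). destruct i; [lia|].
           destruct (Nat.eqb_spec i j).
           ++ subst. rewrite Hj1. rewrite (proj2 (has2_false u j)). simpl. rewrite Nat.eqb_refl. auto.
              intros k Hk X. apply (Hj2 k); auto.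
           ++ rewrite (proj2 (Nat.eqb_neq (S i) (S j))) by lia. rewrite (has2_true u i j) by (auto; lia).
              rewrite Bool.andb_false_r. unfold bit. f_equal. f_equal. f_equal. f_equal. lia.
    + exists (Zend (fun i => negb (Nat.eqb (u i) 0))). intro i. rewrite app_seq_cons. destruct i; auto.
      rewrite codeS_Z, app_seq_nil. unfold PhiZ. rewrite (proj2 (has2_false u i)).
      rewrite (proj2 (Nat.eqb_neq (u i) 2)) by (intro X; apply Hx; eauto). auto.
      intros k Hk X. apply Hx; eauto.
Qed.

Lemma uZ_lt r f i : (i < length r)%nat -> app_seq (map b2n r ++ [2%nat]) f i = b2n (nth i r false).
Proof.
  intro H. rewrite app_seq_lt by (rewrite length_app, length_map; simpl; lia).
  rewrite app_nth1 by (rewrite length_map; auto). rewrite nth_indep with (d' := b2n false) by (rewrite length_map; auto).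
  apply map_nth.
Qed.
Lemma uZ_eq r f : app_seq (map b2n r ++ [2%nat]) f (length r) = 2%nat.
Proof.
  rewrite app_seq_lt by (rewrite length_app, length_map; simpl; lia).
  rewrite app_nth2 by (rewrite length_map; auto). rewrite length_map, Nat.sub_diag. reflexivity.
Qed.
Lemma uZ_gt r f k : app_seq (map b2n r ++ [2%nat]) f (S (length r) + k) = f k.
Proof.
  rewrite app_seq_ge.
  2: { rewrite length_app, length_map. simpl. lia. }
  f_equal. rewrite length_app, length_map. change (length [2%nat]) with 1%nat. lia.
Qed.
Lemma uP_lt n f i : (i < n)%nat -> app_seq (repeat 0%nat n ++ [1%nat]) f i = 0%nat.
Proof.
  intro H. rewrite app_seq_lt by (rewrite length_app, repeat_length; simpl; lia).
  rewrite app_nth1 by (rewrite repeat_length; auto). apply nth_repeat.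
Qed.
Lemma uP_eq n f : app_seq (repeat 0%nat n ++ [1%nat]) f n = 1%nat.
Proof.
  rewrite app_seq_lt by (rewrite length_app, repeat_length; simpl; lia).
  rewrite app_nth2 by (rewrite repeat_length; auto). rewrite repeat_length, Nat.sub_diag. reflexivity.
Qed.
Lemma uP_gt n f k : app_seq (repeat 0%nat n ++ [1%nat]) f (S n + k) = f k.
Proof.
  rewrite app_seq_ge.
  2: { rewrite length_app, repeat_length. simpl. lia. }
  f_equal. rewrite length_app, repeat_length. change (length [1%nat]) with 1%nat. lia.
Qed.

Lemma sh1_app_seq d l f : sh1 (app_seq (d :: l) f) = app_seq l f.
Proof. apply functional_extensionality. intro i. unfold sh1. rewrite app_seq_cons. auto. Qed.

Lemma app_seq_bnd l f : (forall x, In x l -> (x <= 2)%nat) -> (forall i, (f i <= 2)%nat) -> forall i, (app_seq l f i <= 2)%nat.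
Proof.
  intros Hl Hf i. unfold app_seq. destruct (Nat.ltb_spec i (length l)); auto.
  apply Hl. apply nth_In. auto.
Qed.

Lemma bits_le t i : (bits t i <= 2)%nat.
Proof. unfold bits. pose proof (b2n_le (t i)). lia. Qed.

Lemma app_seq_nil_fun f : app_seq [] f = f.
Proof. apply functional_extensionality; intro; apply app_seq_nil. Qed.

Lemma Phi_Z e : e 0%nat <> 2%nat -> Phi e = app_seq [0%nat] (PhiZ (sh1 e)).
Proof. intro H. unfold Phi. destruct (Nat.eqb_spec (e 0%nat) 2); auto; congruence. Qed.
Lemma Phi_P e : e 0%nat = 2%nat -> Phi e = app_seq [1%nat] (PhiP (sh1 e)).
Proof. intro H. unfold Phi. rewrite H. reflexivity. Qed.

Lemma CodePhi x : exists e, (forall i, (e i <= 2)%nat) /\ forall i, code x i = Phi e i.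
Proof.
  destruct x as [z|[r|n] t|].
  - exists (app_seq [0%nat] (bits z)). split.
    + apply app_seq_bnd. simpl; intros; intuition lia. apply bits_le.
    + intro i. first [rewrite Phi_Z by (rewrite app_seq_cons; discriminate) | rewrite Phi_P by (rewrite app_seq_cons; reflexivity)]. rewrite sh1_app_seq.
      rewrite app_seq_nil_fun.
      destruct i; [auto|]. rewrite codeS_Z, !app_seq_cons, !app_seq_nil. unfold PhiZ.
      rewrite (proj2 (has2_false _ _)). unfold bits. destruct (z i); auto.
      intros j _. unfold bits. destruct (z j); simpl; lia.
  - exists (app_seq (0%nat :: map b2n r ++ [2%nat]) (bits t)). split.
    + apply app_seq_bnd. intros y Hy. simpl in Hy. destruct Hy as [<-|Hy]. lia. apply in_app_or in Hy.
      destruct Hy as [Hy|[<-|[]]]. apply in_map_iff in Hy. destruct Hy as [b [<- _]]. pose proof (b2n_le b); lia. lia. apply bits_le.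
    + intro i. first [rewrite Phi_Z by (rewrite app_seq_cons; discriminate) | rewrite Phi_P by (rewrite app_seq_cons; reflexivity)]. rewrite sh1_app_seq.
      rewrite code_Zb. rewrite app_seq_cons. destruct i; auto. rewrite app_seq_nil. unfold PhiZ.
      set (u := app_seq (map b2n r ++ [2%nat]) (bits t)).
      assert (Hlt: forall j, (j < length r)%nat -> u j <> 2%nat).
      { intros j Hj. unfold u. rewrite uZ_lt by auto. destruct (nth j r false); simpl; lia. }
      destruct (Nat.ltb_spec i (length r)).
      * rewrite (proj2 (has2_false _ _)) by (intros; apply Hlt; lia). unfold u. rewrite uZ_lt by auto.
        destruct (nth i r false); auto.
      * destruct (Nat.eqb_spec i (length r)).
        -- subst. rewrite (proj2 (has2_false _ _)) by (intros; apply Hlt; lia). unfold u. rewrite uZ_eq. auto.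
        -- rewrite (has2_true u i (length r)) by (unfold u; auto using uZ_eq; lia).
           destruct i; [lia|]. destruct (Nat.eqb_spec i (length r)).
           ++ subst. rewrite Nat.eqb_refl.
              unfold u at 1. rewrite uZ_eq. rewrite (proj2 (has2_false _ _)) by (intros; apply Hlt; lia). auto.
           ++ rewrite (proj2 (Nat.eqb_neq _ _)) by lia.
              rewrite (has2_true u i (length r)) by (unfold u; auto using uZ_eq; lia). rewrite Bool.andb_false_r.
              unfold u. replace (app_seq (map b2n r ++ [2%nat]) (bits t) i) with (bits t (i - S (length r))%nat).
              2: { rewrite <- (uZ_gt r (bits t)). f_equal. lia. }
              unfold bits, bit. replace (S i - S (S (length r)))%nat with (i - S (length r))%nat by lia.
              destruct (t _); reflexivity.
  - exists (app_seq (2%nat :: repeat 0%nat n ++ [1%nat]) (bits t)). split.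
    + apply app_seq_bnd. intros y Hy. simpl in Hy. destruct Hy as [<-|Hy]. lia. apply in_app_or in Hy.
      destruct Hy as [Hy|[<-|[]]]. apply repeat_spec in Hy. lia. lia. apply bits_le.
    + intro i. first [rewrite Phi_Z by (rewrite app_seq_cons; discriminate) | rewrite Phi_P by (rewrite app_seq_cons; reflexivity)]. rewrite sh1_app_seq.
      rewrite code_Pb. rewrite app_seq_cons. destruct i; auto. rewrite app_seq_nil. unfold PhiP.
      destruct (Nat.ltb_spec i n).
      * rewrite uP_lt by auto. auto.
      * destruct (Nat.eqb_spec i n).
        -- subst. rewrite uP_eq. simpl. rewrite (proj2 (hasnz_false _ _)). auto. intros; apply uP_lt; auto.
        -- rewrite (hasnz_true _ _ n) by (try rewrite uP_eq; lia).
           replace (app_seq (repeat 0%nat n ++ [1%nat]) (bits t) i) with (bits t (i - S n)%nat).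
           2: { rewrite <- (uP_gt n (bits t)). f_equal. lia. }
           unfold bits. destruct (t (i - S n)%nat); simpl; auto.
  - exists (app_seq [2%nat] (fun _ => 0%nat)). split.
    + apply (app_seq_bnd [2%nat] (fun _ => 0%nat)). simpl; intros; intuition lia. intros; lia.
    + intro i. first [rewrite Phi_Z by (rewrite app_seq_cons; discriminate) | rewrite Phi_P by (rewrite app_seq_cons; reflexivity)]. rewrite sh1_app_seq.
      rewrite app_seq_nil_fun.
      destruct i; [auto|]. rewrite codeS_P, !app_seq_cons, !app_seq_nil. unfold PhiP. auto.
Qed.

Lemma Sx_ext a b : (forall i, a i = b i) -> Sx a = Sx b.
Proof. intro H. unfold Sx. apply Series_ext. intro k. unfold term. rewrite H. auto. Qed.

Lemma euclid_x0 a b : euclid (a, 0) (b, 0) = Rabs (a - b).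
Proof.
  unfold euclid. simpl fst; simpl snd.
  replace ((a - b) ^ 2 + (0 - 0) ^ 2) with (Rsqr (a - b)) by (unfold Rsqr; ring).
  apply sqrt_Rsqr_abs.
Qed.

Definition hasp (e : nat -> nat) (l : list nat) := forall i, (i < length l)%nat -> e i = nth i l 0%nat.

Fixpoint kseq (ch : list nat -> nat) (n : nat) : list nat :=
  match n with 0%nat => [] | S m => kseq ch m ++ [ch (kseq ch m)] end.
Lemma kseq_len ch n : length (kseq ch n) = n.
Proof. induction n; simpl; auto. rewrite length_app, IHn. simpl. lia. Qed.
Lemma kseq_pre ch n m : (n <= m)%nat -> forall i, (i < n)%nat -> nth i (kseq ch m) 0%nat = nth i (kseq ch n) 0%nat.
Proof. intros Hnm. induction Hnm; auto. intros i Hi. simpl. rewrite app_nth1 by (rewrite kseq_len; lia). auto. Qed.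
Lemma kseq_last ch i : nth i (kseq ch (S i)) 0%nat = ch (kseq ch i).
Proof. simpl. rewrite app_nth2 by (rewrite kseq_len; lia). rewrite kseq_len, Nat.sub_diag. reflexivity. Qed.

Lemma compact_W : compact_in W euclid.
Proof.
  intros I U Hopen Hcov.
  set (FC := fun l : list nat => exists L : list I, forall e, (forall i, (e i <= 2)%nat) -> hasp e l ->
                exists i, In i L /\ U i (Sx (Phi e), 0)).
  assert (Hsplit : forall l, FC (l ++ [0%nat]) -> FC (l ++ [1%nat]) -> FC (l ++ [2%nat]) -> FC l).
  { intros l [L0 H0] [L1 H1] [L2 H2]. exists (L0 ++ L1 ++ L2). intros e He Hp.
    assert (Hp' : forall c, e (length l) = c -> hasp e (l ++ [c])).
    { intros c Hc i Hi. rewrite length_app in Hi. simpl in Hi. destruct (Nat.lt_ge_cases i (length l)).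
      rewrite app_nth1 by auto. apply Hp; auto. assert (i = length l) by lia. subst. rewrite app_nth2 by lia.
      rewrite Nat.sub_diag. auto. }
    pose proof (He (length l)).
    assert (Hc: e (length l) = 0%nat \/ e (length l) = 1%nat \/ e (length l) = 2%nat) by lia.
    destruct Hc as [E|[E|E]].
    - destruct (H0 e He (Hp' _ E)) as [i [Hi1 Hi2]]. exists i. split; auto. apply in_or_app; auto.
    - destruct (H1 e He (Hp' _ E)) as [i [Hi1 Hi2]]. exists i. split; auto. apply in_or_app; right; apply in_or_app; auto.
    - destruct (H2 e He (Hp' _ E)) as [i [Hi1 Hi2]]. exists i. split; auto. apply in_or_app; right; apply in_or_app; auto. }
  destruct (classic (FC [])) as [[L HL]|HN].
  - exists L. intros q [x ->]. destruct (CodePhi x) as [e [He1 He2]].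
    destruct (HL e He1) as [i [Hi1 Hi2]]. intros j Hj; simpl in Hj; lia.
    exists i. split; auto. replace (ppos x) with (Sx (Phi e), 0); auto. unfold ppos. f_equal. symmetry. apply Sx_ext; auto.
  - exfalso.
    set (choose := fun l : list nat => if excluded_middle_informative (FC (l ++ [0%nat])) then
                     (if excluded_middle_informative (FC (l ++ [1%nat])) then 2%nat else 1%nat) else 0%nat).
    assert (Hch : forall l, ~ FC l -> ~ FC (l ++ [choose l])).
    { intros l Hl. unfold choose. destruct excluded_middle_informative; [|auto].
      destruct excluded_middle_informative; [|auto]. intro X. apply Hl. apply Hsplit; auto. }
    assert (Hch2 : forall l, (choose l <= 2)%nat).
    { intro l. unfold choose. destruct excluded_middle_informative; [destruct excluded_middle_informative|]; lia. }
    set (ks := kseq choose).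
    assert (Hks : forall n, ~ FC (ks n)). { induction n. exact HN. unfold ks. simpl. apply Hch. auto. }
    assert (Hlen : forall n, length (ks n) = n) by (apply kseq_len).
    assert (Hpre : forall n m, (n <= m)%nat -> forall i, (i < n)%nat -> nth i (ks m) 0%nat = nth i (ks n) 0%nat)
      by (apply kseq_pre).
    set (e := fun i => nth i (ks (S i)) 0%nat).
    assert (He : forall i, (e i <= 2)%nat).
    { intro i. unfold e, ks. rewrite kseq_last. apply Hch2. }
    assert (Hep : forall n, hasp e (ks n)).
    { intros n i Hi. rewrite Hlen in Hi. unfold e. symmetry. apply Hpre; lia. }
    destruct (PhiCode e He) as [x Hx].
    assert (Hq : W (Sx (Phi e), 0)). { exists x. unfold ppos. f_equal. symmetry. apply Sx_ext; auto. }
    destruct (Hcov _ Hq) as [i Hi].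
    destruct (proj2 (Hopen i) _ Hi) as [eps [Heps Hball]].
    destruct (small_pow (/2) eps ltac:(lra) Heps) as [n Hn].
    apply (Hks n). exists [i]. intros e' He' Hp'.
    exists i. split. simpl; auto. apply Hball.
    + destruct (PhiCode e' He') as [x' Hx']. exists x'. unfold ppos. f_equal. symmetry. apply Sx_ext; auto.
    + rewrite euclid_x0. destruct (PhiCode e' He') as [x' Hx'].
      rewrite <- (Sx_ext _ _ Hx), <- (Sx_ext _ _ Hx').
      assert (agree (code x) (code x') n).
      { intros j Hj. rewrite Hx, Hx'. apply Phi_agree with n; auto. intros k Hk.
        rewrite (Hep n k) by (rewrite Hlen; auto). rewrite (Hp' k) by (rewrite Hlen; auto). auto. }
      pose proof (ES1 n _ _ (code_bnd x) (code_bnd x') H). lra.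
Qed.

Lemma code_diff x y : x <> y -> exists n, code x n <> code y n.
Proof. intro H. apply NNPP. intro H'. apply H. apply code_inj. intro i. apply NNPP. intro X. apply H'. eauto. Qed.

Lemma td_W : totally_disconnected W euclid.
Proof.
  intros A HA Hc q q' Aq Aq'. apply NNPP. intro Hne.
  destruct (HA q Aq) as [x ->]. destruct (HA q' Aq') as [y ->].
  assert (Hxy : x <> y) by (intro E; apply Hne; subst; auto).
  destruct (code_diff x y Hxy) as [n Hn].
  apply (Hc (cyl A (code x) (S n) True) (cyl A (code x) (S n) False)).
  - apply cyl_open; auto.
  - apply cyl_open; auto.
  - intros q Aq0. unfold cyl. destruct (classic (agree (code (pt_of q)) (code x) (S n))); [left|right]; tauto.
  - intros q [[_ H1] [_ H2]]. tauto.
  - exists (ppos x). unfold cyl. split; auto. rewrite pt_of_ppos. split; auto. intros _ i _; auto.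
  - exists (ppos y). unfold cyl. split; auto. rewrite pt_of_ppos. split; [|tauto]. intro X. apply Hn. symmetry. apply X. lia.
Qed.

Definition flip (f : nat -> bool) (n : nat) : nat -> bool := fun i => if Nat.eqb i n then negb (f i) else f i.

Lemma noiso_W : no_isolated_points W euclid.
Proof.
  intros q [x ->] e He. destruct (small_pow (/2) e ltac:(lra) He) as [n Hn].
  assert (Hex : exists y, y <> x /\ agree (code x) (code y) n).
  { destruct x as [z|b t|].
    - exists (Zend (flip z n)). split.
      + intro E. injection E. intro E'. assert (X := f_equal (fun f => f n) E'). simpl in X. unfold flip in X.
        rewrite Nat.eqb_refl in X. destruct (z n); discriminate.
      + intros i Hi. destruct i. auto. rewrite !codeS_Z. unfold flip. rewrite (proj2 (Nat.eqb_neq i n)) by lia. auto.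
    - exists (Bush b (flip t n)). split.
      + intro E. injection E. intro E'. assert (X := f_equal (fun f => f n) E'). simpl in X. unfold flip in X.
        rewrite Nat.eqb_refl in X. destruct (t n); discriminate.
      + intros i Hi. simpl. unfold app_seq. destruct (Nat.ltb_spec i (length (hdr b))); auto.
        unfold bits, flip. rewrite (proj2 (Nat.eqb_neq _ n)) by lia. auto.
    - exists (Bush (Pb n) (fun _ => false)). split. discriminate.
      intros i Hi. destruct i. rewrite code_Pb. auto. rewrite codeS_P, code_Pb.
      rewrite (proj2 (Nat.ltb_lt i n)) by lia. auto. }
  destruct Hex as [y [Hy1 Hy2]]. exists (ppos y). split. exists y; auto. split.
  - intro E. apply ppos_inj in E. auto.
  - pose proof (EP1 _ _ _ Hy2). lra.
Qed.

Lemma cantor_W : cantor_set W euclid.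
Proof. split; [apply compact_W|split; [apply td_W|apply noiso_W]]. Qed.

Definition mub (b : bid) (L : nat) : R := match b with Zb r => muZ (r ++ [false]) L | Pb n => muP n L end.
Definition bw (b : bid) : R := match b with Zb r => lamZ (r ++ [false]) | Pb n => lamP n end.

Lemma pref_bits t L : pref (bits t) L = map b2n (prefb t L).
Proof. unfold pref, prefb, bits. rewrite map_map. reflexivity. Qed.

Lemma zl_bits s w : zl s (map b2n w) = lamZ (s ++ w).
Proof.
  revert s; induction w as [|c w IH]; intro s; simpl. rewrite app_nil_r; auto.
  destruct c; simpl; rewrite IH, <- app_assoc; auto.
Qed.

Lemma pl_zeros n k l : pl n (repeat 0%nat k ++ l) = pl (n + k) l.
Proof. revert n; induction k; intro n; simpl. rewrite Nat.add_0_r; auto. rewrite IHk. f_equal. lia. Qed.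

Lemma pref_code_Z z k : pref (code (Zend z)) (S k) = 0%nat :: map b2n (prefb z k).
Proof. simpl code. change (S k) with (length [0%nat] + k)%nat. rewrite (pref_app_seq [0%nat] (bits z) k). simpl. rewrite pref_bits. auto. Qed.

Lemma lam_Z z k : lam (pref (code (Zend z)) (S k)) = lamZ (prefb z k).
Proof. rewrite pref_code_Z. simpl. apply zl_bits. Qed.

Lemma pref_code_B b t L : pref (code (Bush b t)) (length (hdr b) + L) = hdr b ++ map b2n (prefb t L).
Proof. simpl code. rewrite pref_app_seq, pref_bits. auto. Qed.

Lemma lam_B b t L : lam (pref (code (Bush b t)) (length (hdr b) + L)) = mub b L.
Proof.
  rewrite pref_code_B. destruct b as [r|n]; simpl.
  - rewrite <- app_assoc. simpl.
    replace (map b2n r ++ 0%nat :: 2%nat :: map b2n (prefb t L)) with (map b2n (r ++ [false]) ++ 2%nat :: map b2n (prefb t L))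
      by (rewrite map_app, <- app_assoc; auto).
    assert (forall s w l, zl s (map b2n w ++ l) = zl (s ++ w) l).
    { intros s w; revert s; induction w as [|c w IH]; intros s l; simpl. rewrite app_nil_r; auto.
      destruct c; simpl; rewrite IH, <- app_assoc; auto. }
    rewrite H. simpl. rewrite length_map, prefb_length. auto.
  - rewrite <- app_assoc. simpl. rewrite pl_zeros. simpl. rewrite length_map, prefb_length. auto.
Qed.

Lemma pref_app_seq_short l f n : (n <= length l)%nat -> pref (app_seq l f) n = firstn n l.
Proof.
  intro H. apply nth_ext with 0%nat 0%nat.
  - rewrite pref_length, length_firstn. lia.
  - intros i Hi. rewrite pref_length in Hi. rewrite nth_pref by auto. rewrite nth_firstn.
    rewrite (proj2 (Nat.ltb_lt _ _) Hi). apply app_seq_lt. lia.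
Qed.

Lemma lam_Bnode b t : lam (pref (code (Bush b t)) (pred (length (hdr b)))) = bw b.
Proof.
  assert (pref (code (Bush b t)) (pred (length (hdr b))) = removelast (hdr b)).
  { simpl code. rewrite pref_app_seq_short by lia. symmetry. apply removelast_firstn_len. }
  rewrite H. destruct b as [r|n]; unfold hdr.
  - replace (0%nat :: map b2n r ++ [0%nat; 2%nat]) with ((0%nat :: map b2n (r ++ [false])) ++ [2%nat])
      by (rewrite map_app; simpl; rewrite <- app_assoc; auto).
    rewrite removelast_last. simpl. rewrite zl_bits. auto.
  - replace (1%nat :: repeat 0%nat n ++ [2%nat]) with ((1%nat :: repeat 0%nat n) ++ [2%nat]) by auto.
    rewrite removelast_last. simpl. replace (repeat 0%nat n) with (repeat 0%nat n ++ []) by apply app_nil_r.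
    rewrite pl_zeros. simpl. auto.
Qed.

Lemma lam_Pfix k : lam (pref (code Pfix) (S k)) = lamP k.
Proof.
  simpl code. change (S k) with (length [1%nat] + k)%nat. rewrite (pref_app_seq [1%nat] (fun _ => 0%nat) k). simpl.
  replace (pref (fun _ => 0%nat) k) with (repeat 0%nat k ++ []).
  rewrite pl_zeros. simpl. auto.
  rewrite app_nil_r. induction k; auto. rewrite pref_S, <- IHk. replace (S k) with (k + 1)%nat by lia. rewrite repeat_app. auto.
Qed.

Lemma small_geo c q e : 0 < c -> 0 <= q < 1 -> 0 < e -> exists n, c * q ^ n < e.
Proof.
  intros Hc Hq He. destruct (pow_lt_1_zero q ltac:(rewrite Rabs_pos_eq; lra) (e / c) ltac:(apply Rdiv_lt_0_compat; lra)) as [N HN].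
  exists N. specialize (HN N (le_n _)). rewrite Rabs_pos_eq in HN by (apply pow_le; lra).
  apply Rmult_lt_reg_l with (/c). apply Rinv_0_lt_compat; lra. rewrite <- Rmult_assoc, Rinv_l by lra.
  replace (/ c * e) with (e / c) by (unfold Rdiv; ring). lra.
Qed.

Lemma pow_half_le x n : 0 < x <= /2 -> x ^ n <= (/2) ^ n.
Proof. intro H. apply pow_incr. lra. Qed.

Lemma lam_tends x e : 0 < e -> exists N, lam (pref (code x) N) < e.
Proof.
  intro He. destruct x as [z|b t|].
  - destruct (small_geo 2 (/2) e ltac:(lra) ltac:(lra) He) as [k Hk]. exists (S k). rewrite lam_Z.
    pose proof (lamZ_hi (prefb z k)). rewrite prefb_length in H. 
    replace (2 / 2 ^ k) with (2 * (/2) ^ k) in H by (rewrite pow_inv; field; apply pow_nonzero; lra). lra.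
  - assert (Hbw : 0 < bw b) by (destruct b; simpl; [apply lamZ_pos|apply lamP_pos]).
    destruct (small_geo (bw b) (/2) e Hbw ltac:(lra) He) as [L HL]. exists (length (hdr b) + L)%nat. rewrite lam_B.
    assert (mub b L <= bw b * (/2) ^ L).
    { destruct b; simpl; unfold muZ, muP.
      - pose proof (theta_bounds (rankZ (r ++ [false]))). pose proof (pow_half_le _ (S L) H).
        pose proof (lamZ_pos (r ++ [false])). simpl in H0 |- *. assert (0 < (/2)^L) by (apply pow_lt; lra).
        assert (0 <= theta (rankZ (r ++ [false])) ^ L) by (apply pow_le; lra). nra.
      - pose proof (theta_bounds (Z.of_nat n)). pose proof (pow_half_le _ (S L) H).
        pose proof (lamP_pos n). simpl in H0 |- *. assert (0 < (/2)^L) by (apply pow_lt; lra). nra. }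
    lra.
  - destruct (small_geo 1 (/2) e ltac:(lra) ltac:(lra) He) as [k Hk]. exists (S k). rewrite lam_Pfix. unfold lamP. lra.
Qed.

Definition dW (q q' : R * R) : R := D (code (pt_of q)) (code (pt_of q')).

Lemma metric_dW : is_metric_on W dW.
Proof.
  unfold dW. split; [|split; [|split]].
  - intros; apply D_nonneg.
  - intros q q' [x ->] [y ->]. rewrite !pt_of_ppos. split.
    + intro H. f_equal. apply code_inj. apply D_zero_iff; auto.
    + intro H. apply ppos_inj in H. subst. apply D_zero. auto.
  - intros; apply D_sym.
  - intros; apply D_triangle.
Qed.

Lemma compat_dW : compatible W dW euclid.
Proof.
  intro U. split; intros [HU Ho]; split; auto.
  - intros q Uq. destruct (HU q Uq) as [x ->]. destruct (Ho _ Uq) as [e [He Hb]].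
    destruct (lam_tends x e He) as [N HN]. exists (/10 * (/5)^N). split. pose proof (pow5_pos N); lra.
    intros q' [y ->] Hd. apply Hb. exists y; auto. unfold dW. rewrite !pt_of_ppos.
    apply EP2 in Hd. pose proof (D_agree _ _ _ Hd). lra.
  - intros q Uq. destruct (HU q Uq) as [x ->]. destruct (Ho _ Uq) as [e [He Hb]].
    destruct (small_pow (/2) e ltac:(lra) He) as [N HN]. exists (lam (pref (code x) N)). split. apply lam_pos.
    intros q' [y ->] Hd. apply Hb. exists y; auto. unfold dW in Hd. rewrite !pt_of_ppos in Hd.
    apply D_small in Hd. pose proof (EP1 _ _ _ Hd). lra.
Qed.

Lemma firstn_inc k r : firstn k (inc r) = inc (firstn k r).
Proof. revert k; induction r as [|[] r IH]; intro k; destruct k; simpl; auto; rewrite ?IH; auto. Qed.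
Lemma firstn_dec k r : firstn k (dec r) = dec (firstn k r).
Proof. revert k; induction r as [|[] r IH]; intro k; destruct k; simpl; auto; rewrite ?IH; auto. Qed.

Lemma bush_agree b t t' N : agree (bits t) (bits t') N -> agree (code (Bush b t)) (code (Bush b t')) (length (hdr b) + N).
Proof. intro H. simpl. apply agree_app_seq; auto. Qed.

Lemma bush_agree_inv b t t' N : agree (code (Bush b t)) (code (Bush b t')) (length (hdr b) + N) -> agree (bits t) (bits t') N.
Proof.
  intros H i Hi. specialize (H (length (hdr b) + i)%nat ltac:(lia)). simpl in H.
  rewrite !app_seq_ge in H by lia. replace (length (hdr b) + i - length (hdr b))%nat with i in H by lia. auto.
Qed.

Lemma agree_Z_Zb z r t K : agree (code (Zend z)) (code (Bush (Zb r) t)) (S (S K)) ->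
  (K <= length r)%nat /\ prefb z K = firstn K r.
Proof.
  intro H. assert (HK : (K <= length r)%nat).
  { destruct (Nat.le_gt_cases K (length r)); auto. exfalso.
    specialize (H (S (S (length r))) ltac:(lia)). rewrite codeS_Z, code_Zb in H.
    rewrite (proj2 (Nat.ltb_ge _ _)), (proj2 (Nat.eqb_neq _ _)), Nat.eqb_refl in H by lia. destruct (z _); discriminate. }
  split; auto. apply nth_ext with false false.
  - rewrite prefb_length, length_firstn. lia.
  - intros j Hj. rewrite prefb_length in Hj. rewrite nth_prefb by auto. rewrite nth_firstn.
    rewrite (proj2 (Nat.ltb_lt _ _) Hj). specialize (H (S j) ltac:(lia)). rewrite codeS_Z, code_Zb in H.
    rewrite (proj2 (Nat.ltb_lt _ _)) in H by lia. apply b2n_inj; auto.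
Qed.

Lemma agree_from_prefb z r t K : (K <= length r)%nat -> prefb z K = firstn K r ->
  agree (code (Zend z)) (code (Bush (Zb r) t)) (S K).
Proof.
  intros H1 H2 i Hi. destruct i. auto. rewrite codeS_Z, code_Zb. rewrite (proj2 (Nat.ltb_lt _ _)) by lia.
  f_equal. rewrite <- (nth_prefb z K i) by lia. rewrite H2, nth_firstn. rewrite (proj2 (Nat.ltb_lt _ _)) by lia. auto.
Qed.

Lemma agree_ZZ z z' K : agree (code (Zend z)) (code (Zend z')) (S K) <-> prefb z K = prefb z' K.
Proof.
  split.
  - intro H. apply prefb_agree. intros i Hi. specialize (H (S i) ltac:(lia)). rewrite !codeS_Z in H. apply b2n_inj; auto.
  - intros H i Hi. destruct i; auto. rewrite !codeS_Z. f_equal. apply (prefb_ext z z' K); auto. lia.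
Qed.

Lemma firstn_repeat_b k n (b : bool) : (k <= n)%nat -> firstn k (repeat b n) = repeat b k.
Proof. revert n; induction k; intros n H; simpl; auto. destruct n; [lia|]. simpl. rewrite IHk; auto; lia. Qed.

Lemma symcont_step : symcont step.
Proof.
  intros x N. destruct x as [z|b t|].
  - exists (S (S (S N))). intros y H. destruct y as [z'|[r|n] t'|].
    + simpl step. apply agree_le with (S (S (S N))); [lia|].
      apply agree_ZZ. apply agree_ZZ in H. rewrite !prefb_odo, H. auto.
    + apply agree_Z_Zb in H. destruct H as [HK HP]. simpl step.
      assert (Hodo : prefb (odo z) N = inc (firstn N r)).
      { rewrite prefb_odo. f_equal. apply nth_ext with false false.
        - rewrite prefb_length, length_firstn. lia.
        - intros j Hj. rewrite prefb_length in Hj. rewrite nth_prefb by auto. rewrite nth_firstn, (proj2 (Nat.ltb_lt _ _) Hj).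
          rewrite <- (nth_prefb z (S N) j) by lia. rewrite HP, nth_firstn. rewrite (proj2 (Nat.ltb_lt _ _)) by lia. auto. }
      unfold bsucc. destruct (allones r) eqn:Ea.
      * destruct r as [|c r']. simpl in HK; lia. simpl in HK.
        apply agree_le with (S N); [lia|]. apply agree_from_prefb. simpl in HK; rewrite repeat_length; lia.
        rewrite Hodo. rewrite firstn_repeat_b by (simpl in HK; lia).
        apply allones_repeat in Ea. rewrite Ea. simpl length. rewrite firstn_repeat_b by lia.
        rewrite inc_allones by (apply allones_rep). rewrite repeat_length. auto.
      * apply agree_le with (S N); [lia|]. apply agree_from_prefb. rewrite length_inc; lia.
        rewrite Hodo, firstn_inc. auto.
    + specialize (H 0%nat ltac:(lia)). rewrite code_Pb in H. discriminate.
    + specialize (H 0%nat ltac:(lia)). discriminate.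
  - exists (length (hdr b) + N)%nat. intros y H. destruct (hdr_class b t y) as [t' ->].
    apply agree_sym. apply agree_le with (length (hdr b) + N)%nat; auto; lia.
    simpl step. apply agree_le with (length (hdr (bsucc b)) + N)%nat; [lia|].
    apply bush_agree. apply bush_agree_inv in H. auto.
  - exists (S N). intros y H. destruct y as [z'|[r|n] t'|].
    + specialize (H 0%nat ltac:(lia)). discriminate.
    + specialize (H 0%nat ltac:(lia)). rewrite code_Zb in H. discriminate.
    + assert (Hn : (N <= n)%nat).
      { destruct (Nat.le_gt_cases N n); auto. specialize (H (S n) ltac:(lia)). rewrite codeS_P, code_Pb in H.
        rewrite Nat.ltb_irrefl, Nat.eqb_refl in H. discriminate. }
      simpl step. intros i Hi. destruct i. rewrite code_Pb; auto. rewrite codeS_P, code_Pb.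
      rewrite (proj2 (Nat.ltb_lt _ _)) by lia. auto.
    + intros i _. auto.
Qed.

Lemma dec_zeros k : dec (repeat false k) = repeat true k.
Proof. induction k; simpl; auto. rewrite IHk; auto. Qed.

Lemma symcont_stepi : symcont stepi.
Proof.
  intros x N. destruct x as [z|b t|].
  - exists (S (S (S N))). intros y H. destruct y as [z'|[r|n] t'|].
    + simpl stepi. apply agree_le with (S (S (S N))); [lia|].
      apply agree_ZZ. apply agree_ZZ in H. rewrite !prefb_dodo, H. auto.
    + apply agree_Z_Zb in H. destruct H as [HK HP]. simpl stepi.
      assert (Hodo : prefb (dodo z) N = dec (firstn N r)).
      { rewrite prefb_dodo. f_equal. apply nth_ext with false false.
        - rewrite prefb_length, length_firstn. lia.
        - intros j Hj. rewrite prefb_length in Hj. rewrite nth_prefb by auto. rewrite nth_firstn, (proj2 (Nat.ltb_lt _ _) Hj).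
          rewrite <- (nth_prefb z (S N) j) by lia. rewrite HP, nth_firstn. rewrite (proj2 (Nat.ltb_lt _ _)) by lia. auto. }
      unfold bpred. destruct (allzeros r) eqn:Ea.
      * apply agree_le with (S N); [lia|]. apply agree_from_prefb. simpl; rewrite ?repeat_length; lia.
        rewrite Hodo. change (true :: repeat true (length r)) with (repeat true (S (length r))).
        rewrite firstn_repeat_b by lia.
        apply allzeros_repeat in Ea. rewrite Ea. rewrite firstn_repeat_b by lia. apply dec_zeros.
      * apply agree_le with (S N); [lia|]. apply agree_from_prefb. rewrite length_dec; lia.
        rewrite Hodo, firstn_dec. auto.
    + specialize (H 0%nat ltac:(lia)). rewrite code_Pb in H. discriminate.
    + specialize (H 0%nat ltac:(lia)). discriminate.
  - exists (length (hdr b) + N)%nat. intros y H. destruct (hdr_class b t y) as [t' ->].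
    apply agree_sym. apply agree_le with (length (hdr b) + N)%nat; auto; lia.
    simpl stepi. apply agree_le with (length (hdr (bpred b)) + N)%nat; [lia|].
    apply bush_agree. apply bush_agree_inv in H. auto.
  - exists (S (S N)). intros y H. destruct y as [z'|[r|n] t'|].
    + specialize (H 0%nat ltac:(lia)). discriminate.
    + specialize (H 0%nat ltac:(lia)). rewrite code_Zb in H. discriminate.
    + assert (Hn : (S N <= n)%nat).
      { destruct (Nat.le_gt_cases (S N) n); auto. specialize (H (S n) ltac:(lia)). rewrite codeS_P, code_Pb in H.
        rewrite Nat.ltb_irrefl, Nat.eqb_refl in H. discriminate. }
      destruct n as [|n]; [lia|]. simpl stepi. intros i Hi. destruct i. rewrite code_Pb; auto. rewrite codeS_P, code_Pb.
      rewrite (proj2 (Nat.ltb_lt _ _)) by lia. auto.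
    + intros i _. auto.
Qed.

Definition Gmap (q : R * R) : R * R := ppos (step (pt_of q)).
Definition Hmap (q : R * R) : R * R := ppos (stepi (pt_of q)).

Lemma homeo_G : homeomorphism_on W euclid Gmap.
Proof.
  split; [|split].
  - intros q _. exists (step (pt_of q)). auto.
  - apply cont_of_symcont. apply symcont_step.
  - exists Hmap. split; [|split; [|split]].
    + intros q _. exists (stepi (pt_of q)). auto.
    + apply cont_of_symcont. apply symcont_stepi.
    + intros q [x ->]. unfold Gmap, Hmap. rewrite !pt_of_ppos, stepi_step. auto.
    + intros q [x ->]. unfold Gmap, Hmap. rewrite !pt_of_ppos, step_stepi. auto.
Qed.

Lemma inc_snoc w c : inc (w ++ [c]) = inc w ++ [if allones w then negb c else c].
Proof. induction w as [|b w IH]; [destruct c; reflexivity|]. destruct b; simpl; auto. rewrite IH. auto. Qed.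

Lemma odo_at z j : odo z j = if allones (prefb z j) then negb (z j) else z j.
Proof.
  assert (H := prefb_odo z (S j)). rewrite !prefb_S in H. rewrite inc_snoc in H.
  apply app_inj_tail in H. destruct H as [_ H]. auto.
Qed.

Lemma firstn_S_nth (r : list bool) j : (j < length r)%nat -> firstn (S j) r = firstn j r ++ [nth j r false].
Proof.
  revert j; induction r as [|c r IH]; intros j H; simpl in H. lia.
  destruct j. simpl. auto. change (firstn (S (S j)) (c :: r)) with (c :: firstn (S j) r).
  rewrite IH by lia. reflexivity.
Qed.

Lemma nth_inc r j : (j < length r)%nat -> nth j (inc r) false = if allones (firstn j r) then negb (nth j r false) else nth j r false.
Proof.
  intro H. assert (E := firstn_inc (S j) r). rewrite (firstn_S_nth r j H) in E.
  rewrite (firstn_S_nth (inc r) j) in E by (rewrite length_inc; auto). rewrite inc_snoc, firstn_inc in E.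
  apply app_inj_tail in E. destruct E as [_ E]. auto.
Qed.

Definition zbcond (z : nat -> bool) (r : list bool) (j : nat) : Prop :=
  ((j < length r)%nat /\ prefb z j = firstn j r /\ z j <> nth j r false) \/
  (j = length r /\ prefb z j = r /\ z j = true) \/
  (j = S (length r) /\ prefb z j = r ++ [false]).

Lemma prefb_firstn z j k : (k <= j)%nat -> firstn k (prefb z j) = prefb z k.
Proof.
  intro H. apply nth_ext with false false. rewrite length_firstn, !prefb_length. lia.
  intros i Hi. rewrite length_firstn, prefb_length in Hi. rewrite nth_firstn. rewrite (proj2 (Nat.ltb_lt _ _)) by lia.
  rewrite !nth_prefb by lia. auto.
Qed.

Lemma char_Zb z r t j :
  (agree (code (Zend z)) (code (Bush (Zb r) t)) (S j) /\ code (Zend z) (S j) <> code (Bush (Zb r) t) (S j))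
  <-> zbcond z r j.
Proof.
  split.
  - intros [A Df]. rewrite codeS_Z, code_Zb in Df.
    assert (Hj : (j <= S (length r))%nat).
    { destruct (Nat.le_gt_cases j (S (length r))); auto. exfalso. specialize (A (S (S (length r))) ltac:(lia)).
      rewrite codeS_Z, code_Zb in A. rewrite (proj2 (Nat.ltb_ge _ _)), (proj2 (Nat.eqb_neq _ _)), Nat.eqb_refl in A by lia.
      destruct (z _); discriminate. }
    assert (HP : forall i, (i < j)%nat -> (i < length r)%nat -> z i = nth i r false).
    { intros i Hi1 Hi2. specialize (A (S i) ltac:(lia)). rewrite codeS_Z, code_Zb in A.
      rewrite (proj2 (Nat.ltb_lt _ _)) in A by lia. apply b2n_inj; auto. }
    assert (HPr : forall k, (k <= j)%nat -> (k <= length r)%nat -> prefb z k = firstn k r).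
    { intros k Hk1 Hk2. apply nth_ext with false false. rewrite prefb_length, length_firstn; lia.
      intros i Hi. rewrite prefb_length in Hi. rewrite nth_prefb, nth_firstn by lia. rewrite (proj2 (Nat.ltb_lt _ _)) by lia.
      apply HP; lia. }
    unfold zbcond. destruct (Nat.lt_trichotomy j (length r)) as [L|[L|L]].
    + left. split; auto. split. apply HPr; lia. rewrite (proj2 (Nat.ltb_lt _ _)) in Df by lia. intro E; apply Df; rewrite E; auto.
    + right; left. subst j. split; auto. split. rewrite HPr by lia. apply firstn_all.
      rewrite Nat.ltb_irrefl, Nat.eqb_refl in Df. destruct (z (length r)); [reflexivity| exfalso; apply Df; reflexivity].
    + right; right. assert (j = S (length r)) by lia. subst j. split; auto.
      rewrite prefb_S. rewrite HPr by lia. rewrite firstn_all. f_equal.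
      specialize (A (S (length r)) ltac:(lia)). rewrite codeS_Z, code_Zb in A. rewrite Nat.ltb_irrefl, Nat.eqb_refl in A.
      destruct (z (length r)); auto; discriminate.
  - intro H. split.
    + intros i Hi. destruct i. auto. rewrite codeS_Z, code_Zb.
      assert (Hz : forall i, (i < j)%nat -> (i < length r)%nat -> z i = nth i r false).
      { intros k Hk1 Hk2. destruct H as [[_ [H _]]|[[_ [H _]]|[_ H]]];
        rewrite <- (nth_prefb z j k) by lia; rewrite H.
        rewrite nth_firstn, (proj2 (Nat.ltb_lt _ _)) by lia; auto. auto. rewrite app_nth1 by lia; auto. }
      destruct (Nat.ltb_spec i (length r)). rewrite Hz by lia; auto.
      destruct (Nat.eqb_spec i (length r)).
      * subst i. destruct H as [[X _]|[[X _]|[X H]]]; try lia. subst j.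
        rewrite <- (nth_prefb z (S (length r)) (length r)) by lia. rewrite H. rewrite app_nth2 by lia.
        rewrite Nat.sub_diag. auto.
      * destruct H as [[X _]|[[X _]|[X _]]]; lia.
    + rewrite codeS_Z, code_Zb. destruct H as [[X [_ H]]|[[X [_ H]]|[X _]]].
      * rewrite (proj2 (Nat.ltb_lt _ _)) by lia. intro E; apply H; apply b2n_inj; auto.
      * subst j. rewrite Nat.ltb_irrefl, Nat.eqb_refl, H. discriminate.
      * subst j. rewrite (proj2 (Nat.ltb_ge _ _)), (proj2 (Nat.eqb_neq _ _)), Nat.eqb_refl by lia. destruct (z _); discriminate.
Qed.

Lemma badw_ones m : badw (repeat true m ++ [false]).
Proof. unfold badw. rewrite length_app, repeat_length. simpl. replace (m + 1 - 1)%nat with m by lia. auto. Qed.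

Lemma inc_ones m : inc (repeat true m) = repeat false m.
Proof. induction m; simpl; auto. rewrite IHm; auto. Qed.

Lemma allones_firstn k r : allones r = true -> allones (firstn k r) = true.
Proof. revert k; induction r as [|c r IH]; intros k H; destruct k; simpl in *; auto. destruct c; simpl in *; auto. Qed.

Lemma Zend_step_diff z y j : (2 <= j)%nat -> ~ badw (prefb z j) ->
  agree (code (Zend z)) (code y) (S j) -> code (Zend z) (S j) <> code y (S j) ->
  agree (code (Zend (odo z))) (code (step y)) (S j) /\ code (Zend (odo z)) (S j) <> code (step y) (S j).
Proof.
  intros Hj Hb A Df. destruct y as [z'|[r|n] t|].
  - simpl step. apply agree_ZZ in A. rewrite !codeS_Z in Df |- *. split.
    + apply agree_ZZ. rewrite !prefb_odo, A. auto.
    + rewrite !odo_at, A. intro E. apply Df. destruct (allones (prefb z' j)); destruct (z j), (z' j); simpl in *; auto; discriminate.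
  - assert (C : zbcond z r j) by (apply (proj1 (char_Zb z r t j)); auto). simpl step. unfold bsucc.
    destruct (allones r) eqn:Ea.
    + destruct r as [|c r0].
      * exfalso. destruct C as [[X _]|[[X _]|[X _]]]; simpl in X; lia.
      * apply (proj2 (char_Zb _ _ t j)). unfold zbcond.
        assert (Er : c :: r0 = repeat true (S (length r0))) by (apply allones_repeat in Ea; exact Ea).
        set (m := length r0) in *. rewrite Er in C. unfold zbcond in C. rewrite ?repeat_length in C. clear Ea.
        destruct C as [[X [P1 P2]]|[[X [P1 P2]]|[X P1]]].
        -- rewrite firstn_repeat_b in P1 by lia. rewrite nth_repeat_lt in P2 by lia.
           assert (Hz : z j = false) by (destruct (z j); auto; congruence).
           assert (Po : prefb (odo z) j = repeat false j) by (rewrite prefb_odo, P1; apply inc_ones).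
           assert (Oj : odo z j = true) by (rewrite odo_at, P1, allones_rep, Hz; auto).
           destruct (Nat.lt_ge_cases j m).
           ++ left. rewrite repeat_length. split; auto. split. rewrite firstn_repeat_b by lia. auto.
              rewrite nth_repeat_lt, Oj by lia. discriminate.
           ++ right; left. rewrite repeat_length. split. lia. split; auto. rewrite Po. f_equal. lia.
        -- right; right. rewrite repeat_length. split. lia.
           rewrite prefb_odo, P1, inc_ones. replace (S m) with (m + 1)%nat by lia. rewrite repeat_app. auto.
        -- exfalso. apply Hb. rewrite P1. apply badw_ones.
    + apply (proj2 (char_Zb _ _ t j)). unfold zbcond. destruct C as [[X [P1 P2]]|[[X [P1 P2]]|[X P1]]].
      * left. rewrite length_inc. split; auto. split. rewrite prefb_odo, P1, firstn_inc. auto.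
        rewrite odo_at, nth_inc by auto. rewrite P1. destruct (allones (firstn j r)); destruct (z j), (nth j r false); simpl in *; congruence.
      * right; left. rewrite length_inc. split; auto. split. rewrite prefb_odo, P1. auto.
        rewrite odo_at, P1, Ea. auto.
      * right; right. rewrite length_inc. split; auto. rewrite prefb_odo, P1, inc_snoc, Ea. auto.
  - exfalso. specialize (A 0%nat ltac:(lia)). rewrite code_Pb in A. discriminate.
  - exfalso. specialize (A 0%nat ltac:(lia)). discriminate.
Qed.

Lemma noK z : exists K, (2 <= K)%nat /\ forall j, (K <= j)%nat -> ~ badw (prefb z j).
Proof.
  destruct (classic (exists j0, badw (prefb z j0))) as [[j0 H0]|H].
  - exists (Nat.max 2 (S j0)). split. lia. intros j Hj Hb.
    assert (Hz : forall k, badw (prefb z k) -> (1 <= k)%nat /\ z (k - 1)%nat = false /\ forall i, (i < k - 1)%nat -> z i = true).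
    { intros k Hk. unfold badw in Hk. rewrite prefb_length in Hk. destruct k.
      simpl in Hk. discriminate. split. lia. replace (S k - 1)%nat with k in * by lia. split.
      - rewrite <- (nth_prefb z (S k) k) by lia. rewrite Hk. rewrite app_nth2; rewrite repeat_length; [|lia].
        rewrite Nat.sub_diag. auto.
      - intros i Hi. rewrite <- (nth_prefb z (S k) i) by lia. rewrite Hk. rewrite app_nth1 by (rewrite repeat_length; lia).
        apply nth_repeat_lt. lia. }
    destruct (Hz _ H0) as [A1 [A2 A3]]. destruct (Hz _ Hb) as [B1 [B2 B3]].
    rewrite B3 in A2 by lia. discriminate.
  - exists 2%nat. split; auto. intros j _ X. apply H. eauto.
Qed.

Lemma pow2_mono j k : (j <= k)%nat -> / 2 ^ k <= / 2 ^ j.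
Proof.
  intro H. apply Rinv_le_contravar. apply pow_lt; lra. apply Rle_pow; auto; lra.
Qed.

Lemma LRS_Zend z : exists e, 0 < e /\ forall y, 0 < D (code (Zend z)) (code y) < e ->
  D (code (step (Zend z))) (code (step y)) < D (code (Zend z)) (code y).
Proof.
  destruct (noK z) as [K [HK1 HK2]]. exists (/ 2 ^ K). split. apply Rinv_0_lt_compat, pow_lt; lra.
  intros y [Hd1 Hd2]. destruct (D_cases (code (Zend z)) (code y)) as [E|[m [A [Df Dm]]]].
  - rewrite D_zero in Hd1; auto. lra.
  - assert (H4 : / 2 ^ K <= /4).
    { replace (/4) with (/ 2 ^ 2) by (simpl; lra). apply pow2_mono; auto. }
    destruct m as [|j]. { assert (X : lam (pref (code (Zend z)) 0) = 4) by reflexivity. rewrite X in Dm. lra. }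
    rewrite lam_Z in Dm. pose proof (lamZ_lo (prefb z j)). rewrite prefb_length in H.
    assert (HjK : (K < j)%nat).
    { destruct (Nat.lt_ge_cases K j); auto. pose proof (pow2_mono j K H0). lra. }
    destruct (Zend_step_diff z y j ltac:(lia) (HK2 j ltac:(lia)) A Df) as [A' Df'].
    change (step (Zend z)) with (Zend (odo z)). rewrite (D_eq _ _ _ A' Df'). rewrite lam_Z, Dm, prefb_odo. apply lamZ_inc.
    intro X. apply (f_equal (@length bool)) in X. rewrite prefb_length in X. simpl in X. lia.
    apply HK2; lia.
Qed.

Definition rank (b : bid) : Z := match b with Zb r => rankZ (r ++ [false]) | Pb n => Z.of_nat n end.

Lemma mub_eq b L : mub b L = bw b * theta (rank b) ^ (S L).
Proof. destruct b; reflexivity. Qed.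

Lemma bw_pos b : 0 < bw b.
Proof. destruct b; simpl. apply lamZ_pos. apply lamP_pos. Qed.

Lemma pow2_S k : (2 ^ S k = 2 * 2 ^ k)%nat.
Proof. simpl. lia. Qed.

Lemma rank_bsucc b : rank (bsucc b) = (rank b + 1)%Z.
Proof.
  destruct b as [r|n]; simpl.
  - destruct (allones r) eqn:Ea.
    + destruct r as [|c r0].
      * simpl. unfold rankZ. simpl. lia.
      * simpl rank. apply allones_repeat in Ea. rewrite Ea. simpl length. set (m := length r0).
        unfold rankZ. rewrite !length_app, !repeat_length. simpl length.
        rewrite !v_app, v_repeat_false. simpl b2n. rewrite repeat_length.
        pose proof (v_repeat_true (S m)). rewrite !Nat.mul_0_r, !Nat.add_0_r.
        replace (S m + 1)%nat with (S (S m)) by lia. replace (m + 1)%nat with (S m) by lia.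
        rewrite (pow2_S (S m)) in *. lia.
    + simpl. unfold rankZ. rewrite !length_app, length_inc. rewrite !v_app, v_inc by auto. simpl b2n. lia.
  - lia.
Qed.

Lemma geo_cmp a a' th th' : 0 < a -> 0 < a' -> 0 < th' < th -> exists L0, forall L, (L0 <= L)%nat -> a' * th' ^ (S L) < a * th ^ (S L).
Proof.
  intros Ha Ha' Hth. set (q := th' / th). assert (Hq : 0 < q < 1).
  { unfold q. split. apply Rdiv_lt_0_compat; lra. apply Rmult_lt_reg_r with th. lra. unfold Rdiv. rewrite Rmult_assoc, Rinv_l; lra. }
  destruct (pow_lt_1_zero q ltac:(rewrite Rabs_pos_eq; lra) (a / a') ltac:(apply Rdiv_lt_0_compat; lra)) as [N HN].
  exists N. intros L HL. specialize (HN (S L) ltac:(lia)). rewrite Rabs_pos_eq in HN by (apply pow_le; lra).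
  assert (E : th' ^ S L = q ^ S L * th ^ S L). { rewrite <- Rpow_mult_distr. f_equal. unfold q. field. lra. }
  rewrite E. assert (0 < th ^ S L) by (apply pow_lt; lra).
  assert (a' * q ^ S L < a). { apply Rmult_lt_reg_l with (/ a'). apply Rinv_0_lt_compat; lra.
    rewrite <- Rmult_assoc, Rinv_l by lra. replace (/ a' * a) with (a / a') by (unfold Rdiv; ring). lra. }
  nra.
Qed.

Lemma bush_L0 b : exists L0, forall L, (L0 <= L)%nat -> mub (bsucc b) L < mub b L.
Proof.
  destruct (geo_cmp (bw b) (bw (bsucc b)) (theta (rank b)) (theta (rank (bsucc b))) (bw_pos b) (bw_pos _)) as [L0 HL0].
  { pose proof (theta_bounds (rank (bsucc b))). rewrite rank_bsucc. rewrite rank_bsucc in H. pose proof (theta_dec (rank b)). lra. }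
  exists L0. intros L HL. rewrite !mub_eq. auto.
Qed.

Lemma code_B_at b t L : code (Bush b t) (length (hdr b) + L) = bits t L.
Proof. simpl. rewrite app_seq_ge by lia. f_equal. lia. Qed.

Lemma LRS_Bush b t : exists e, 0 < e /\ forall y, 0 < D (code (Bush b t)) (code y) < e ->
  D (code (step (Bush b t))) (code (step y)) < D (code (Bush b t)) (code y).
Proof.
  destruct (bush_L0 b) as [L0 HL0]. exists (mub b L0). split.
  { rewrite mub_eq. pose proof (bw_pos b). pose proof (pow_pos_lt1 _ L0 (theta_bounds (rank b))). nra. }
  intros y [Hd1 Hd2]. rewrite <- (lam_B b t L0) in Hd2. apply D_small in Hd2.
  destruct (hdr_class b t y) as [t' ->]. { apply agree_sym. apply agree_le with (length (hdr b) + L0)%nat; auto; lia. }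
  destruct (D_cases (code (Bush b t)) (code (Bush b t'))) as [E|[m [A [Df Dm]]]].
  - rewrite D_zero in Hd1; auto. lra.
  - assert (Hm : (length (hdr b) + L0 <= m)%nat).
    { destruct (Nat.le_gt_cases (length (hdr b) + L0) m); auto. exfalso. apply Df. apply Hd2. auto. }
    set (L := (m - length (hdr b))%nat). replace m with (length (hdr b) + L)%nat in * by (unfold L; lia).
    rewrite lam_B in Dm. rewrite Dm. rewrite !code_B_at in Df.
    apply bush_agree_inv in A. simpl step.
    rewrite (D_eq _ _ (length (hdr (bsucc b)) + L)).
    + rewrite lam_B. apply HL0. unfold L; lia.
    + apply bush_agree; auto.
    + rewrite !code_B_at. auto.
Qed.

Lemma LRS_Pfix : exists e, 0 < e /\ forall y, 0 < D (code Pfix) (code y) < e ->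
  D (code (step Pfix)) (code (step y)) < D (code Pfix) (code y).
Proof.
  exists 4. split. lra. intros y [Hd1 Hd2].
  destruct (D_cases (code Pfix) (code y)) as [E|[m [A [Df Dm]]]].
  - rewrite D_zero in Hd1; auto. lra.
  - destruct m as [|k]. { assert (X : lam (pref (code Pfix) 0) = 4) by reflexivity. lra. }
    rewrite lam_Pfix in Dm. destruct y as [z|[r|n] t|].
    + exfalso. specialize (A 0%nat ltac:(lia)). discriminate.
    + exfalso. specialize (A 0%nat ltac:(lia)). rewrite code_Zb in A. discriminate.
    + assert (n = k).
      { destruct (Nat.lt_trichotomy n k) as [L|[L|L]]; auto; exfalso.
        - specialize (A (S n) ltac:(lia)). rewrite codeS_P, code_Pb, Nat.ltb_irrefl, Nat.eqb_refl in A. discriminate.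
        - apply Df. rewrite codeS_P, code_Pb. rewrite (proj2 (Nat.ltb_lt _ _)) by lia. auto. }
      subst n. simpl step. rewrite (D_eq _ _ (S (S k))).
      * rewrite lam_Pfix. rewrite Dm. apply lamP_S.
      * intros i Hi. destruct i. rewrite code_Pb; auto. rewrite codeS_P, code_Pb. rewrite (proj2 (Nat.ltb_lt _ _)) by lia. auto.
      * rewrite codeS_P, code_Pb, Nat.ltb_irrefl, Nat.eqb_refl. discriminate.
    + exfalso. apply Df. auto.
Qed.

Lemma LRS_sym x : exists e, 0 < e /\ forall y, 0 < D (code x) (code y) < e ->
  D (code (step x)) (code (step y)) < D (code x) (code y).
Proof. destruct x. apply LRS_Zend. apply LRS_Bush. apply LRS_Pfix. Qed.

Lemma LRS_G : LRS W dW Gmap.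
Proof.
  intros q [x ->]. destruct (LRS_sym x) as [e [He H]]. exists e. split; auto.
  intros q' [y ->] Hd. unfold dW, Gmap in *. rewrite !pt_of_ppos in *. apply H. auto.
Qed.

Lemma iter_G n x : Nat.iter n Gmap (ppos x) = ppos (Nat.iter n step x).
Proof. induction n; simpl; auto. rewrite IHn. unfold Gmap. rewrite pt_of_ppos. auto. Qed.

Lemma iter_step_B n b t : Nat.iter n step (Bush b t) = Bush (Nat.iter n bsucc b) t.
Proof. induction n; simpl; auto. rewrite IHn. auto. Qed.
Lemma iter_step_Z n z : Nat.iter n step (Zend z) = Zend (Nat.iter n odo z).
Proof. induction n; simpl; auto. rewrite IHn. auto. Qed.
Lemma iter_rank n b : rank (Nat.iter n bsucc b) = (rank b + Z.of_nat n)%Z.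
Proof. induction n; simpl. lia. rewrite rank_bsucc, IHn. lia. Qed.
Lemma iter_Pb n : Nat.iter n bsucc (Pb 0) = Pb n.
Proof. induction n; simpl; auto. rewrite IHn. auto. Qed.

Lemma v_inc_mod w : v (inc w) = if Nat.eqb (v w + 1) (2 ^ length w) then 0%nat else (v w + 1)%nat.
Proof.
  destruct (allones w) eqn:E.
  - rewrite inc_allones, v_repeat_false by auto. apply allones_repeat in E.
    rewrite E, repeat_length. pose proof (v_repeat_true (length w)). rewrite H, Nat.eqb_refl. auto.
  - rewrite v_inc by auto. pose proof (v_lt (inc w)). rewrite length_inc, v_inc in H by auto.
    rewrite (proj2 (Nat.eqb_neq _ _)) by lia. lia.
Qed.

Lemma iter_inc_v w n : (n < 2 ^ length w)%nat ->
  length (Nat.iter n inc w) = length w /\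
  v (Nat.iter n inc w) = (if (v w + n <? 2 ^ length w)%nat then v w + n else v w + n - 2 ^ length w)%nat.
Proof.
  induction n; intro H.
  - simpl. pose proof (v_lt w). rewrite (proj2 (Nat.ltb_lt _ _)) by lia. split; auto; lia.
  - destruct IHn as [IH1 IH2]. lia. simpl. rewrite length_inc, IH1. split; auto.
    rewrite v_inc_mod, IH2, IH1. pose proof (v_lt w).
    repeat (first [ match goal with |- context [Nat.ltb ?a ?b] => destruct (Nat.ltb_spec a b) end
                  | match goal with |- context [Nat.eqb ?a ?b] => destruct (Nat.eqb_spec a b) end ]; cbv iota); lia.
Qed.

Lemma pow2_gt n : (n < 2 ^ n)%nat.
Proof. induction n; simpl; lia. Qed.

Lemma prefb_iter_odo n z k : prefb (Nat.iter n odo z) k = Nat.iter n inc (prefb z k).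
Proof. induction n; simpl; auto. rewrite prefb_odo, IHn. auto. Qed.

Lemma odo_noper n z : (1 <= n)%nat -> Nat.iter n odo z <> z.
Proof.
  intros Hn E. assert (X := f_equal (fun f => prefb f n) E). simpl in X. rewrite prefb_iter_odo in X.
  destruct (iter_inc_v (prefb z n) n) as [_ Hv]. rewrite prefb_length. apply pow2_gt.
  rewrite X in Hv. rewrite prefb_length in Hv. pose proof (v_lt (prefb z n)). rewrite prefb_length in H.
  pose proof (pow2_gt n). destruct (Nat.ltb_spec (v (prefb z n) + n) (2 ^ n)); lia.
Qed.

Lemma periodic_W : exists p, W p /\ Gmap p = p /\ forall x, W x -> (periodic_point Gmap x <-> x = p).
Proof.
  exists (ppos Pfix). split. exists Pfix; auto. split.
  - unfold Gmap. rewrite pt_of_ppos. auto.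
  - intros q [x ->]. split.
    + intros [n [Hn E]]. rewrite iter_G in E. apply ppos_inj in E. f_equal.
      destruct x as [z|b t|]; auto; exfalso.
      * rewrite iter_step_Z in E. injection E. apply odo_noper. auto.
      * rewrite iter_step_B in E. injection E. intro Eb. apply (f_equal rank) in Eb. rewrite iter_rank in Eb. lia.
    + intro E. apply ppos_inj in E. subst. exists 1%nat. split; auto. simpl. unfold Gmap. rewrite pt_of_ppos. auto.
Qed.

Lemma not_trans : ~ transitive_on W euclid Gmap.
Proof.
  intro HT. set (c0 := code (Bush (Pb 0) (fun _ => false))).
  set (U := cyl W c0 2 True).
  assert (HU : ropen W euclid U) by (apply cyl_open; auto).
  assert (HUne : exists x, U x).
  { exists (ppos (Bush (Pb 0) (fun _ => false))). unfold U, cyl. split. eexists; eauto. rewrite pt_of_ppos. split; [intros _; exact I| intros _ i _; reflexivity]. }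
  destruct (HT U U HU HU HUne HUne) as [n [Hn [q [Uq Vq]]]].
  destruct Uq as [[x ->] Ux]. rewrite pt_of_ppos in Ux. destruct Ux as [_ Ux]. specialize (Ux I).
  destruct (hdr_class (Pb 0) (fun _ => false) x) as [t ->]. simpl. auto.
  rewrite iter_G, iter_step_B, iter_Pb in Vq. destruct Vq as [_ [_ Vq]]. rewrite pt_of_ppos in Vq.
  specialize (Vq I (1%nat) ltac:(lia)). unfold c0 in Vq. rewrite !code_Pb in Vq.
  destruct n as [|n]; [lia|]. simpl in Vq. discriminate.
Qed.

Theorem theoremE :
  exists (W : R * R -> Prop) (d : R * R -> R * R -> R) (G : R * R -> R * R),
    cantor_set W euclid /\
    is_metric_on W d /\ compatible W d euclid /\
    homeomorphism_on W euclid G /\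
    ~ transitive_on W euclid G /\
    LRS W d G /\
    (exists p, W p /\ G p = p /\ forall x, W x -> (periodic_point G x <-> x = p)).
Proof.
  exists W, dW, Gmap. split; [apply cantor_W|]. split; [apply metric_dW|]. split; [apply compat_dW|].
  split; [apply homeo_G|]. split; [apply not_trans|]. split; [apply LRS_G|]. apply periodic_W.
Qed.
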